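(* With optimal play by both players, the transversal $3$-game is a draw: each of the two players has a strategy guaranteeing that they do not lose.
   Context: A transversal of an $n\times n$ grid is a set of $n$ cells no two of which lie in the same row or the same column. The transversal $n$-game is played on an $n\times n$ grid by two players who alternate moves, player 1 moving first. On each move, the player to move claims one currently unoccupied cell (player 1 marks it $X$, player 2 marks it $O$). The first player (if any) to have claimed all $n$ cells of some transversal wins. If the grid becomes completely filled and neither player has claimed a transversal, the game is a draw. *)

(* Defs.v *)
From mathcomp Require Import all_boot.
Set Implicit Arguments. Unset Strict Implicit. Unset Printing Implicit Defensive.

Definition cell (n : nat) := ('I_n * 'I_n)%type.

Definition is_transversal (n : nat) (T : {set cell n}) : bool :=
  (#|T| == n) &&
  [forall x in T, forall y in T, (x != y) ==> ((x.1 != y.1) && (x.2 != y.2))].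

Definition has_transversal (n : nat) (A : seq (cell n)) : bool :=
  [exists T : {set cell n}, is_transversal T && (T \subset [set x | x \in A])].

(* A history is the list of claimed cells in the order they were claimed.
   Move number k (0-based) is made by player 1 (X) if k is even and by
   player 2 (O) if k is odd.  We encode the player by a boolean p:
   p = false is player 1, p = true is player 2; player p makes the moves
   with odd k == p. *)
Definition claimed_by (n : nat) (p : bool) (h : seq (cell n)) : seq (cell n) :=
  [seq x.2 | x <- zip (iota 0 (size h)) h & odd x.1 == p].

Definition finished (n : nat) (h : seq (cell n)) : bool :=
  [|| has_transversal (claimed_by false h), has_transversal (claimed_by true h)
    | size h == n * n].

Definition legal_history (n : nat) (h : seq (cell n)) : bool :=
  uniq h && all (fun k => ~~ finished (take k h)) (iota 0 (size h)).

(* The player to move after history h is player (odd (size h)). *)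

Definition strategy (n : nat) := seq (cell n) -> cell n.

Definition consistent (n : nat) (p : bool) (sigma : strategy n) (h : seq (cell n)) : bool :=
  all (fun k => (odd k == p) ==> (take k.+1 h == rcons (take k h) (sigma (take k h))))
      (iota 0 (size h)).

Definition guarantees_no_loss (n : nat) (p : bool) (sigma : strategy n) : Prop :=
  (forall h : seq (cell n), legal_history h -> ~~ finished h ->
     odd (size h) = p -> consistent p sigma h -> sigma h \notin h) /\
  (forall h : seq (cell n), legal_history h -> finished h ->
     consistent p sigma h -> ~~ has_transversal (claimed_by (~~ p) h)).

(* Main.v *)
Require Import Defs.
From mathcomp Require Import all_boot.
Set Implicit Arguments. Unset Strict Implicit. Unset Printing Implicit Defensive.

Definition ord3 (n : nat) : 'I_3 :=
  match n with 0 => @Ordinal 3 0 isT | 1 => @Ordinal 3 1 isT | _ => @Ordinal 3 2 isT end.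
Definition mkc (i j : nat) : cell 3 := (ord3 i, ord3 j).
Definition idx (c : cell 3) : nat := 3 * c.1 + c.2.
Definition cell_of (m : nat) : cell 3 := mkc (m %/ 3) (m %% 3).

Fixpoint eqsn (a b : seq nat) : bool :=
  match a, b with [::], [::] => true | x :: a', y :: b' => eqn x y && eqsn a' b' | _, _ => false end.
Fixpoint lookup (key : seq nat) (t : seq (seq nat * nat)) : nat :=
  match t with [::] => 0 | (k, v) :: t' => if eqsn k key then v else lookup key t' end.

Definition tab0 : seq (seq nat * nat) := [::
([:: ], 0);
([:: 0; 1], 2);
([:: 0; 1; 2; 3], 8);
([:: 0; 1; 2; 3; 8; 4], 5);
([:: 0; 1; 2; 3; 8; 4; 5; 6], 7);
([:: 0; 1; 2; 3; 8; 4; 5; 7], 6);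
([:: 0; 1; 2; 3; 8; 5], 4);
([:: 0; 1; 2; 3; 8; 6], 4);
([:: 0; 1; 2; 3; 8; 7], 4);
([:: 0; 1; 2; 4], 3);
([:: 0; 1; 2; 4; 3; 5], 6);
([:: 0; 1; 2; 4; 3; 5; 6; 7], 8);
([:: 0; 1; 2; 4; 3; 5; 6; 8], 7);
([:: 0; 1; 2; 4; 3; 6], 5);
([:: 0; 1; 2; 4; 3; 6; 5; 7], 8);
([:: 0; 1; 2; 4; 3; 6; 5; 8], 7);
([:: 0; 1; 2; 4; 3; 7], 5);
([:: 0; 1; 2; 4; 3; 7; 5; 6], 8);
([:: 0; 1; 2; 4; 3; 7; 5; 8], 6);
([:: 0; 1; 2; 4; 3; 8], 5);
([:: 0; 1; 2; 4; 3; 8; 5; 6], 7);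
([:: 0; 1; 2; 4; 3; 8; 5; 7], 6);
([:: 0; 1; 2; 5], 6);
([:: 0; 1; 2; 5; 6; 3], 4);
([:: 0; 1; 2; 5; 6; 4], 3);
([:: 0; 1; 2; 5; 6; 4; 3; 7], 8);
([:: 0; 1; 2; 5; 6; 4; 3; 8], 7);
([:: 0; 1; 2; 5; 6; 7], 3);
([:: 0; 1; 2; 5; 6; 7; 3; 4], 8);
([:: 0; 1; 2; 5; 6; 7; 3; 8], 4);
([:: 0; 1; 2; 5; 6; 8], 3);
([:: 0; 1; 2; 5; 6; 8; 3; 4], 7);
([:: 0; 1; 2; 5; 6; 8; 3; 7], 4);
([:: 0; 1; 2; 6], 5);
([:: 0; 1; 2; 6; 5; 3], 7);
([:: 0; 1; 2; 6; 5; 4], 3);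
([:: 0; 1; 2; 6; 5; 4; 3; 7], 8);
([:: 0; 1; 2; 6; 5; 4; 3; 8], 7);
([:: 0; 1; 2; 6; 5; 7], 3);
([:: 0; 1; 2; 6; 5; 7; 3; 4], 8);
([:: 0; 1; 2; 6; 5; 7; 3; 8], 4);
([:: 0; 1; 2; 6; 5; 8], 3);
([:: 0; 1; 2; 6; 5; 8; 3; 4], 7);
([:: 0; 1; 2; 6; 5; 8; 3; 7], 4);
([:: 0; 1; 2; 7], 3);
([:: 0; 1; 2; 7; 3; 4], 5);
([:: 0; 1; 2; 7; 3; 4; 5; 6], 8);
([:: 0; 1; 2; 7; 3; 4; 5; 8], 6);
([:: 0; 1; 2; 7; 3; 5], 6);
([:: 0; 1; 2; 7; 3; 5; 6; 4], 8);
([:: 0; 1; 2; 7; 3; 5; 6; 8], 4);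
([:: 0; 1; 2; 7; 3; 6], 5);
([:: 0; 1; 2; 7; 3; 6; 5; 4], 8);
([:: 0; 1; 2; 7; 3; 6; 5; 8], 4);
([:: 0; 1; 2; 7; 3; 8], 4);
([:: 0; 1; 2; 7; 3; 8; 4; 5], 6);
([:: 0; 1; 2; 7; 3; 8; 4; 6], 5);
([:: 0; 1; 2; 8], 3);
([:: 0; 1; 2; 8; 3; 4], 5);
([:: 0; 1; 2; 8; 3; 4; 5; 6], 7);
([:: 0; 1; 2; 8; 3; 4; 5; 7], 6);
([:: 0; 1; 2; 8; 3; 5], 6);
([:: 0; 1; 2; 8; 3; 5; 6; 4], 7);
([:: 0; 1; 2; 8; 3; 5; 6; 7], 4);
([:: 0; 1; 2; 8; 3; 6], 5);
([:: 0; 1; 2; 8; 3; 6; 5; 4], 7);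
([:: 0; 1; 2; 8; 3; 6; 5; 7], 4);
([:: 0; 1; 2; 8; 3; 7], 4);
([:: 0; 1; 2; 8; 3; 7; 4; 5], 6);
([:: 0; 1; 2; 8; 3; 7; 4; 6], 5);
([:: 0; 2], 1);
([:: 0; 2; 1; 3], 7);
([:: 0; 2; 1; 3; 7; 4], 5);
([:: 0; 2; 1; 3; 7; 5], 4);
([:: 0; 2; 1; 3; 7; 5; 4; 6], 8);
([:: 0; 2; 1; 3; 7; 5; 4; 8], 6);
([:: 0; 2; 1; 3; 7; 6], 4);
([:: 0; 2; 1; 3; 7; 6; 4; 5], 8);
([:: 0; 2; 1; 3; 7; 6; 4; 8], 5);
([:: 0; 2; 1; 3; 7; 8], 4);
([:: 0; 2; 1; 3; 7; 8; 4; 5], 6);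
([:: 0; 2; 1; 3; 7; 8; 4; 6], 5);
([:: 0; 2; 1; 4], 6);
([:: 0; 2; 1; 4; 6; 3], 5);
([:: 0; 2; 1; 4; 6; 5], 3);
([:: 0; 2; 1; 4; 6; 5; 3; 7], 8);
([:: 0; 2; 1; 4; 6; 5; 3; 8], 7);
([:: 0; 2; 1; 4; 6; 7], 3);
([:: 0; 2; 1; 4; 6; 7; 3; 5], 8);
([:: 0; 2; 1; 4; 6; 7; 3; 8], 5);
([:: 0; 2; 1; 4; 6; 8], 3);
([:: 0; 2; 1; 4; 6; 8; 3; 5], 7);
([:: 0; 2; 1; 4; 6; 8; 3; 7], 5);
([:: 0; 2; 1; 5], 3);
([:: 0; 2; 1; 5; 3; 4], 6);
([:: 0; 2; 1; 5; 3; 4; 6; 7], 8);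
([:: 0; 2; 1; 5; 3; 4; 6; 8], 7);
([:: 0; 2; 1; 5; 3; 6], 4);
([:: 0; 2; 1; 5; 3; 6; 4; 7], 8);
([:: 0; 2; 1; 5; 3; 6; 4; 8], 7);
([:: 0; 2; 1; 5; 3; 7], 4);
([:: 0; 2; 1; 5; 3; 7; 4; 6], 8);
([:: 0; 2; 1; 5; 3; 7; 4; 8], 6);
([:: 0; 2; 1; 5; 3; 8], 4);
([:: 0; 2; 1; 5; 3; 8; 4; 6], 7);
([:: 0; 2; 1; 5; 3; 8; 4; 7], 6);
([:: 0; 2; 1; 6], 4);
([:: 0; 2; 1; 6; 4; 3], 7);
([:: 0; 2; 1; 6; 4; 3; 7; 5], 8);
([:: 0; 2; 1; 6; 4; 3; 7; 8], 5);
([:: 0; 2; 1; 6; 4; 5], 3);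
([:: 0; 2; 1; 6; 4; 5; 3; 7], 8);
([:: 0; 2; 1; 6; 4; 5; 3; 8], 7);
([:: 0; 2; 1; 6; 4; 7], 3);
([:: 0; 2; 1; 6; 4; 7; 3; 5], 8);
([:: 0; 2; 1; 6; 4; 7; 3; 8], 5);
([:: 0; 2; 1; 6; 4; 8], 3);
([:: 0; 2; 1; 6; 4; 8; 3; 5], 7);
([:: 0; 2; 1; 6; 4; 8; 3; 7], 5);
([:: 0; 2; 1; 7], 3);
([:: 0; 2; 1; 7; 3; 4], 6);
([:: 0; 2; 1; 7; 3; 4; 6; 5], 8);
([:: 0; 2; 1; 7; 3; 4; 6; 8], 5);
([:: 0; 2; 1; 7; 3; 5], 4);
([:: 0; 2; 1; 7; 3; 5; 4; 6], 8);
([:: 0; 2; 1; 7; 3; 5; 4; 8], 6);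
([:: 0; 2; 1; 7; 3; 6], 4);
([:: 0; 2; 1; 7; 3; 6; 4; 5], 8);
([:: 0; 2; 1; 7; 3; 6; 4; 8], 5);
([:: 0; 2; 1; 7; 3; 8], 4);
([:: 0; 2; 1; 7; 3; 8; 4; 5], 6);
([:: 0; 2; 1; 7; 3; 8; 4; 6], 5);
([:: 0; 2; 1; 8], 3);
([:: 0; 2; 1; 8; 3; 4], 6);
([:: 0; 2; 1; 8; 3; 4; 6; 5], 7);
([:: 0; 2; 1; 8; 3; 4; 6; 7], 5);
([:: 0; 2; 1; 8; 3; 5], 4);
([:: 0; 2; 1; 8; 3; 5; 4; 6], 7);
([:: 0; 2; 1; 8; 3; 5; 4; 7], 6);
([:: 0; 2; 1; 8; 3; 6], 4);
([:: 0; 2; 1; 8; 3; 6; 4; 5], 7);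
([:: 0; 2; 1; 8; 3; 6; 4; 7], 5);
([:: 0; 2; 1; 8; 3; 7], 4);
([:: 0; 2; 1; 8; 3; 7; 4; 5], 6);
([:: 0; 2; 1; 8; 3; 7; 4; 6], 5);
([:: 0; 3], 1);
([:: 0; 3; 1; 2], 7);
([:: 0; 3; 1; 2; 7; 4], 5);
([:: 0; 3; 1; 2; 7; 5], 4);
([:: 0; 3; 1; 2; 7; 5; 4; 6], 8);
([:: 0; 3; 1; 2; 7; 5; 4; 8], 6);
([:: 0; 3; 1; 2; 7; 6], 4);
([:: 0; 3; 1; 2; 7; 6; 4; 5], 8);
([:: 0; 3; 1; 2; 7; 6; 4; 8], 5);
([:: 0; 3; 1; 2; 7; 8], 4);
([:: 0; 3; 1; 2; 7; 8; 4; 5], 6);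
([:: 0; 3; 1; 2; 7; 8; 4; 6], 5);
([:: 0; 3; 1; 4], 2);
([:: 0; 3; 1; 4; 2; 5], 6);
([:: 0; 3; 1; 4; 2; 5; 6; 7], 8);
([:: 0; 3; 1; 4; 2; 5; 6; 8], 7);
([:: 0; 3; 1; 4; 2; 6], 5);
([:: 0; 3; 1; 4; 2; 6; 5; 7], 8);
([:: 0; 3; 1; 4; 2; 6; 5; 8], 7);
([:: 0; 3; 1; 4; 2; 7], 5);
([:: 0; 3; 1; 4; 2; 7; 5; 6], 8);
([:: 0; 3; 1; 4; 2; 7; 5; 8], 6);
([:: 0; 3; 1; 4; 2; 8], 5);
([:: 0; 3; 1; 4; 2; 8; 5; 6], 7);
([:: 0; 3; 1; 4; 2; 8; 5; 7], 6);
([:: 0; 3; 1; 5], 2);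
([:: 0; 3; 1; 5; 2; 4], 6);
([:: 0; 3; 1; 5; 2; 4; 6; 7], 8);
([:: 0; 3; 1; 5; 2; 4; 6; 8], 7);
([:: 0; 3; 1; 5; 2; 6], 4);
([:: 0; 3; 1; 5; 2; 6; 4; 7], 8);
([:: 0; 3; 1; 5; 2; 6; 4; 8], 7);
([:: 0; 3; 1; 5; 2; 7], 4);
([:: 0; 3; 1; 5; 2; 7; 4; 6], 8);
([:: 0; 3; 1; 5; 2; 7; 4; 8], 6);
([:: 0; 3; 1; 5; 2; 8], 4);
([:: 0; 3; 1; 5; 2; 8; 4; 6], 7);
([:: 0; 3; 1; 5; 2; 8; 4; 7], 6);
([:: 0; 3; 1; 6], 2);
([:: 0; 3; 1; 6; 2; 4], 5);
([:: 0; 3; 1; 6; 2; 4; 5; 7], 8);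
([:: 0; 3; 1; 6; 2; 4; 5; 8], 7);
([:: 0; 3; 1; 6; 2; 5], 4);
([:: 0; 3; 1; 6; 2; 5; 4; 7], 8);
([:: 0; 3; 1; 6; 2; 5; 4; 8], 7);
([:: 0; 3; 1; 6; 2; 7], 4);
([:: 0; 3; 1; 6; 2; 7; 4; 5], 8);
([:: 0; 3; 1; 6; 2; 7; 4; 8], 5);
([:: 0; 3; 1; 6; 2; 8], 4);
([:: 0; 3; 1; 6; 2; 8; 4; 5], 7);
([:: 0; 3; 1; 6; 2; 8; 4; 7], 5);
([:: 0; 3; 1; 7], 2);
([:: 0; 3; 1; 7; 2; 4], 5);
([:: 0; 3; 1; 7; 2; 4; 5; 6], 8);
([:: 0; 3; 1; 7; 2; 4; 5; 8], 6);
([:: 0; 3; 1; 7; 2; 5], 4);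
([:: 0; 3; 1; 7; 2; 5; 4; 6], 8);
([:: 0; 3; 1; 7; 2; 5; 4; 8], 6);
([:: 0; 3; 1; 7; 2; 6], 4);
([:: 0; 3; 1; 7; 2; 6; 4; 5], 8);
([:: 0; 3; 1; 7; 2; 6; 4; 8], 5);
([:: 0; 3; 1; 7; 2; 8], 4);
([:: 0; 3; 1; 7; 2; 8; 4; 5], 6);
([:: 0; 3; 1; 7; 2; 8; 4; 6], 5);
([:: 0; 3; 1; 8], 2);
([:: 0; 3; 1; 8; 2; 4], 5);
([:: 0; 3; 1; 8; 2; 4; 5; 6], 7);
([:: 0; 3; 1; 8; 2; 4; 5; 7], 6);
([:: 0; 3; 1; 8; 2; 5], 4);
([:: 0; 3; 1; 8; 2; 5; 4; 6], 7);
([:: 0; 3; 1; 8; 2; 5; 4; 7], 6);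
([:: 0; 3; 1; 8; 2; 6], 4);
([:: 0; 3; 1; 8; 2; 6; 4; 5], 7);
([:: 0; 3; 1; 8; 2; 6; 4; 7], 5);
([:: 0; 3; 1; 8; 2; 7], 4);
([:: 0; 3; 1; 8; 2; 7; 4; 5], 6);
([:: 0; 3; 1; 8; 2; 7; 4; 6], 5);
([:: 0; 4], 1);
([:: 0; 4; 1; 2], 6);
([:: 0; 4; 1; 2; 6; 3], 5);
([:: 0; 4; 1; 2; 6; 5], 3);
([:: 0; 4; 1; 2; 6; 5; 3; 7], 8);
([:: 0; 4; 1; 2; 6; 5; 3; 8], 7);
([:: 0; 4; 1; 2; 6; 7], 3);
([:: 0; 4; 1; 2; 6; 7; 3; 5], 8);
([:: 0; 4; 1; 2; 6; 7; 3; 8], 5);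
([:: 0; 4; 1; 2; 6; 8], 3);
([:: 0; 4; 1; 2; 6; 8; 3; 5], 7);
([:: 0; 4; 1; 2; 6; 8; 3; 7], 5);
([:: 0; 4; 1; 3], 2);
([:: 0; 4; 1; 3; 2; 5], 6);
([:: 0; 4; 1; 3; 2; 5; 6; 7], 8);
([:: 0; 4; 1; 3; 2; 5; 6; 8], 7);
([:: 0; 4; 1; 3; 2; 6], 5);
([:: 0; 4; 1; 3; 2; 6; 5; 7], 8);
([:: 0; 4; 1; 3; 2; 6; 5; 8], 7);
([:: 0; 4; 1; 3; 2; 7], 5);
([:: 0; 4; 1; 3; 2; 7; 5; 6], 8);
([:: 0; 4; 1; 3; 2; 7; 5; 8], 6);
([:: 0; 4; 1; 3; 2; 8], 5);
([:: 0; 4; 1; 3; 2; 8; 5; 6], 7);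
([:: 0; 4; 1; 3; 2; 8; 5; 7], 6);
([:: 0; 4; 1; 5], 2);
([:: 0; 4; 1; 5; 2; 3], 6);
([:: 0; 4; 1; 5; 2; 3; 6; 7], 8);
([:: 0; 4; 1; 5; 2; 3; 6; 8], 7);
([:: 0; 4; 1; 5; 2; 6], 3);
([:: 0; 4; 1; 5; 2; 6; 3; 7], 8);
([:: 0; 4; 1; 5; 2; 6; 3; 8], 7);
([:: 0; 4; 1; 5; 2; 7], 3);
([:: 0; 4; 1; 5; 2; 7; 3; 6], 8);
([:: 0; 4; 1; 5; 2; 7; 3; 8], 6);
([:: 0; 4; 1; 5; 2; 8], 3);
([:: 0; 4; 1; 5; 2; 8; 3; 6], 7);
([:: 0; 4; 1; 5; 2; 8; 3; 7], 6);
([:: 0; 4; 1; 6], 2);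
([:: 0; 4; 1; 6; 2; 3], 5);
([:: 0; 4; 1; 6; 2; 3; 5; 7], 8);
([:: 0; 4; 1; 6; 2; 3; 5; 8], 7);
([:: 0; 4; 1; 6; 2; 5], 3);
([:: 0; 4; 1; 6; 2; 5; 3; 7], 8);
([:: 0; 4; 1; 6; 2; 5; 3; 8], 7);
([:: 0; 4; 1; 6; 2; 7], 3);
([:: 0; 4; 1; 6; 2; 7; 3; 5], 8);
([:: 0; 4; 1; 6; 2; 7; 3; 8], 5);
([:: 0; 4; 1; 6; 2; 8], 3);
([:: 0; 4; 1; 6; 2; 8; 3; 5], 7);
([:: 0; 4; 1; 6; 2; 8; 3; 7], 5);
([:: 0; 4; 1; 7], 2);
([:: 0; 4; 1; 7; 2; 3], 5);
([:: 0; 4; 1; 7; 2; 3; 5; 6], 8);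
([:: 0; 4; 1; 7; 2; 3; 5; 8], 6);
([:: 0; 4; 1; 7; 2; 5], 3);
([:: 0; 4; 1; 7; 2; 5; 3; 6], 8);
([:: 0; 4; 1; 7; 2; 5; 3; 8], 6);
([:: 0; 4; 1; 7; 2; 6], 3);
([:: 0; 4; 1; 7; 2; 6; 3; 5], 8);
([:: 0; 4; 1; 7; 2; 6; 3; 8], 5);
([:: 0; 4; 1; 7; 2; 8], 3);
([:: 0; 4; 1; 7; 2; 8; 3; 5], 6);
([:: 0; 4; 1; 7; 2; 8; 3; 6], 5);
([:: 0; 4; 1; 8], 2);
([:: 0; 4; 1; 8; 2; 3], 5);
([:: 0; 4; 1; 8; 2; 3; 5; 6], 7);
([:: 0; 4; 1; 8; 2; 3; 5; 7], 6);
([:: 0; 4; 1; 8; 2; 5], 3);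
([:: 0; 4; 1; 8; 2; 5; 3; 6], 7);
([:: 0; 4; 1; 8; 2; 5; 3; 7], 6);
([:: 0; 4; 1; 8; 2; 6], 3);
([:: 0; 4; 1; 8; 2; 6; 3; 5], 7);
([:: 0; 4; 1; 8; 2; 6; 3; 7], 5);
([:: 0; 4; 1; 8; 2; 7], 3);
([:: 0; 4; 1; 8; 2; 7; 3; 5], 6);
([:: 0; 4; 1; 8; 2; 7; 3; 6], 5);
([:: 0; 5], 1);
([:: 0; 5; 1; 2], 3);
([:: 0; 5; 1; 2; 3; 4], 6);
([:: 0; 5; 1; 2; 3; 4; 6; 7], 8);
([:: 0; 5; 1; 2; 3; 4; 6; 8], 7);
([:: 0; 5; 1; 2; 3; 6], 4);
([:: 0; 5; 1; 2; 3; 6; 4; 7], 8);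
([:: 0; 5; 1; 2; 3; 6; 4; 8], 7);
([:: 0; 5; 1; 2; 3; 7], 4);
([:: 0; 5; 1; 2; 3; 7; 4; 6], 8);
([:: 0; 5; 1; 2; 3; 7; 4; 8], 6);
([:: 0; 5; 1; 2; 3; 8], 4);
([:: 0; 5; 1; 2; 3; 8; 4; 6], 7);
([:: 0; 5; 1; 2; 3; 8; 4; 7], 6);
([:: 0; 5; 1; 3], 2);
([:: 0; 5; 1; 3; 2; 4], 6);
([:: 0; 5; 1; 3; 2; 4; 6; 7], 8);
([:: 0; 5; 1; 3; 2; 4; 6; 8], 7);
([:: 0; 5; 1; 3; 2; 6], 4);
([:: 0; 5; 1; 3; 2; 6; 4; 7], 8);
([:: 0; 5; 1; 3; 2; 6; 4; 8], 7);
([:: 0; 5; 1; 3; 2; 7], 4);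
([:: 0; 5; 1; 3; 2; 7; 4; 6], 8);
([:: 0; 5; 1; 3; 2; 7; 4; 8], 6);
([:: 0; 5; 1; 3; 2; 8], 4);
([:: 0; 5; 1; 3; 2; 8; 4; 6], 7);
([:: 0; 5; 1; 3; 2; 8; 4; 7], 6);
([:: 0; 5; 1; 4], 2);
([:: 0; 5; 1; 4; 2; 3], 6);
([:: 0; 5; 1; 4; 2; 3; 6; 7], 8);
([:: 0; 5; 1; 4; 2; 3; 6; 8], 7);
([:: 0; 5; 1; 4; 2; 6], 3);
([:: 0; 5; 1; 4; 2; 6; 3; 7], 8);
([:: 0; 5; 1; 4; 2; 6; 3; 8], 7);
([:: 0; 5; 1; 4; 2; 7], 3);
([:: 0; 5; 1; 4; 2; 7; 3; 6], 8);
([:: 0; 5; 1; 4; 2; 7; 3; 8], 6);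
([:: 0; 5; 1; 4; 2; 8], 3);
([:: 0; 5; 1; 4; 2; 8; 3; 6], 7);
([:: 0; 5; 1; 4; 2; 8; 3; 7], 6);
([:: 0; 5; 1; 6], 2);
([:: 0; 5; 1; 6; 2; 3], 4);
([:: 0; 5; 1; 6; 2; 3; 4; 7], 8);
([:: 0; 5; 1; 6; 2; 3; 4; 8], 7);
([:: 0; 5; 1; 6; 2; 4], 3);
([:: 0; 5; 1; 6; 2; 4; 3; 7], 8);
([:: 0; 5; 1; 6; 2; 4; 3; 8], 7);
([:: 0; 5; 1; 6; 2; 7], 3);
([:: 0; 5; 1; 6; 2; 7; 3; 4], 8);
([:: 0; 5; 1; 6; 2; 7; 3; 8], 4);
([:: 0; 5; 1; 6; 2; 8], 3);
([:: 0; 5; 1; 6; 2; 8; 3; 4], 7);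
([:: 0; 5; 1; 6; 2; 8; 3; 7], 4);
([:: 0; 5; 1; 7], 2);
([:: 0; 5; 1; 7; 2; 3], 4);
([:: 0; 5; 1; 7; 2; 3; 4; 6], 8);
([:: 0; 5; 1; 7; 2; 3; 4; 8], 6);
([:: 0; 5; 1; 7; 2; 4], 3);
([:: 0; 5; 1; 7; 2; 4; 3; 6], 8);
([:: 0; 5; 1; 7; 2; 4; 3; 8], 6);
([:: 0; 5; 1; 7; 2; 6], 3);
([:: 0; 5; 1; 7; 2; 6; 3; 4], 8);
([:: 0; 5; 1; 7; 2; 6; 3; 8], 4);
([:: 0; 5; 1; 7; 2; 8], 3);
([:: 0; 5; 1; 7; 2; 8; 3; 4], 6);
([:: 0; 5; 1; 7; 2; 8; 3; 6], 4);
([:: 0; 5; 1; 8], 2);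
([:: 0; 5; 1; 8; 2; 3], 4);
([:: 0; 5; 1; 8; 2; 3; 4; 6], 7);
([:: 0; 5; 1; 8; 2; 3; 4; 7], 6);
([:: 0; 5; 1; 8; 2; 4], 3);
([:: 0; 5; 1; 8; 2; 4; 3; 6], 7);
([:: 0; 5; 1; 8; 2; 4; 3; 7], 6);
([:: 0; 5; 1; 8; 2; 6], 3);
([:: 0; 5; 1; 8; 2; 6; 3; 4], 7);
([:: 0; 5; 1; 8; 2; 6; 3; 7], 4);
([:: 0; 5; 1; 8; 2; 7], 3);
([:: 0; 5; 1; 8; 2; 7; 3; 4], 6);
([:: 0; 5; 1; 8; 2; 7; 3; 6], 4);
([:: 0; 6], 1);
([:: 0; 6; 1; 2], 4);
([:: 0; 6; 1; 2; 4; 3], 7);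
([:: 0; 6; 1; 2; 4; 3; 7; 5], 8);
([:: 0; 6; 1; 2; 4; 3; 7; 8], 5);
([:: 0; 6; 1; 2; 4; 5], 3);
([:: 0; 6; 1; 2; 4; 5; 3; 7], 8);
([:: 0; 6; 1; 2; 4; 5; 3; 8], 7);
([:: 0; 6; 1; 2; 4; 7], 3);
([:: 0; 6; 1; 2; 4; 7; 3; 5], 8);
([:: 0; 6; 1; 2; 4; 7; 3; 8], 5);
([:: 0; 6; 1; 2; 4; 8], 3);
([:: 0; 6; 1; 2; 4; 8; 3; 5], 7);
([:: 0; 6; 1; 2; 4; 8; 3; 7], 5);
([:: 0; 6; 1; 3], 2);
([:: 0; 6; 1; 3; 2; 4], 5);
([:: 0; 6; 1; 3; 2; 4; 5; 7], 8);
([:: 0; 6; 1; 3; 2; 4; 5; 8], 7);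
([:: 0; 6; 1; 3; 2; 5], 4);
([:: 0; 6; 1; 3; 2; 5; 4; 7], 8);
([:: 0; 6; 1; 3; 2; 5; 4; 8], 7);
([:: 0; 6; 1; 3; 2; 7], 4);
([:: 0; 6; 1; 3; 2; 7; 4; 5], 8);
([:: 0; 6; 1; 3; 2; 7; 4; 8], 5);
([:: 0; 6; 1; 3; 2; 8], 4);
([:: 0; 6; 1; 3; 2; 8; 4; 5], 7);
([:: 0; 6; 1; 3; 2; 8; 4; 7], 5);
([:: 0; 6; 1; 4], 2);
([:: 0; 6; 1; 4; 2; 3], 5);
([:: 0; 6; 1; 4; 2; 3; 5; 7], 8);
([:: 0; 6; 1; 4; 2; 3; 5; 8], 7);
([:: 0; 6; 1; 4; 2; 5], 3);
([:: 0; 6; 1; 4; 2; 5; 3; 7], 8);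
([:: 0; 6; 1; 4; 2; 5; 3; 8], 7);
([:: 0; 6; 1; 4; 2; 7], 3);
([:: 0; 6; 1; 4; 2; 7; 3; 5], 8);
([:: 0; 6; 1; 4; 2; 7; 3; 8], 5);
([:: 0; 6; 1; 4; 2; 8], 3);
([:: 0; 6; 1; 4; 2; 8; 3; 5], 7);
([:: 0; 6; 1; 4; 2; 8; 3; 7], 5);
([:: 0; 6; 1; 5], 2);
([:: 0; 6; 1; 5; 2; 3], 4);
([:: 0; 6; 1; 5; 2; 3; 4; 7], 8);
([:: 0; 6; 1; 5; 2; 3; 4; 8], 7);
([:: 0; 6; 1; 5; 2; 4], 3);
([:: 0; 6; 1; 5; 2; 4; 3; 7], 8);
([:: 0; 6; 1; 5; 2; 4; 3; 8], 7);
([:: 0; 6; 1; 5; 2; 7], 3);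
([:: 0; 6; 1; 5; 2; 7; 3; 4], 8);
([:: 0; 6; 1; 5; 2; 7; 3; 8], 4);
([:: 0; 6; 1; 5; 2; 8], 3);
([:: 0; 6; 1; 5; 2; 8; 3; 4], 7);
([:: 0; 6; 1; 5; 2; 8; 3; 7], 4);
([:: 0; 6; 1; 7], 2);
([:: 0; 6; 1; 7; 2; 3], 4);
([:: 0; 6; 1; 7; 2; 3; 4; 5], 8);
([:: 0; 6; 1; 7; 2; 3; 4; 8], 5);
([:: 0; 6; 1; 7; 2; 4], 3);
([:: 0; 6; 1; 7; 2; 4; 3; 5], 8);
([:: 0; 6; 1; 7; 2; 4; 3; 8], 5);
([:: 0; 6; 1; 7; 2; 5], 3);
([:: 0; 6; 1; 7; 2; 5; 3; 4], 8);
([:: 0; 6; 1; 7; 2; 5; 3; 8], 4);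
([:: 0; 6; 1; 7; 2; 8], 3);
([:: 0; 6; 1; 7; 2; 8; 3; 4], 5);
([:: 0; 6; 1; 7; 2; 8; 3; 5], 4);
([:: 0; 6; 1; 8], 2);
([:: 0; 6; 1; 8; 2; 3], 4);
([:: 0; 6; 1; 8; 2; 3; 4; 5], 7);
([:: 0; 6; 1; 8; 2; 3; 4; 7], 5);
([:: 0; 6; 1; 8; 2; 4], 3);
([:: 0; 6; 1; 8; 2; 4; 3; 5], 7);
([:: 0; 6; 1; 8; 2; 4; 3; 7], 5);
([:: 0; 6; 1; 8; 2; 5], 3);
([:: 0; 6; 1; 8; 2; 5; 3; 4], 7);
([:: 0; 6; 1; 8; 2; 5; 3; 7], 4);
([:: 0; 6; 1; 8; 2; 7], 3);
([:: 0; 6; 1; 8; 2; 7; 3; 4], 5);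
([:: 0; 6; 1; 8; 2; 7; 3; 5], 4);
([:: 0; 7], 1);
([:: 0; 7; 1; 2], 3);
([:: 0; 7; 1; 2; 3; 4], 6);
([:: 0; 7; 1; 2; 3; 4; 6; 5], 8);
([:: 0; 7; 1; 2; 3; 4; 6; 8], 5);
([:: 0; 7; 1; 2; 3; 5], 4);
([:: 0; 7; 1; 2; 3; 5; 4; 6], 8);
([:: 0; 7; 1; 2; 3; 5; 4; 8], 6);
([:: 0; 7; 1; 2; 3; 6], 4);
([:: 0; 7; 1; 2; 3; 6; 4; 5], 8);
([:: 0; 7; 1; 2; 3; 6; 4; 8], 5);
([:: 0; 7; 1; 2; 3; 8], 4);
([:: 0; 7; 1; 2; 3; 8; 4; 5], 6);
([:: 0; 7; 1; 2; 3; 8; 4; 6], 5);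
([:: 0; 7; 1; 3], 2);
([:: 0; 7; 1; 3; 2; 4], 5);
([:: 0; 7; 1; 3; 2; 4; 5; 6], 8);
([:: 0; 7; 1; 3; 2; 4; 5; 8], 6);
([:: 0; 7; 1; 3; 2; 5], 4);
([:: 0; 7; 1; 3; 2; 5; 4; 6], 8);
([:: 0; 7; 1; 3; 2; 5; 4; 8], 6);
([:: 0; 7; 1; 3; 2; 6], 4);
([:: 0; 7; 1; 3; 2; 6; 4; 5], 8);
([:: 0; 7; 1; 3; 2; 6; 4; 8], 5);
([:: 0; 7; 1; 3; 2; 8], 4);
([:: 0; 7; 1; 3; 2; 8; 4; 5], 6);
([:: 0; 7; 1; 3; 2; 8; 4; 6], 5);
([:: 0; 7; 1; 4], 2);
([:: 0; 7; 1; 4; 2; 3], 5);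
([:: 0; 7; 1; 4; 2; 3; 5; 6], 8);
([:: 0; 7; 1; 4; 2; 3; 5; 8], 6);
([:: 0; 7; 1; 4; 2; 5], 3);
([:: 0; 7; 1; 4; 2; 5; 3; 6], 8);
([:: 0; 7; 1; 4; 2; 5; 3; 8], 6);
([:: 0; 7; 1; 4; 2; 6], 3);
([:: 0; 7; 1; 4; 2; 6; 3; 5], 8);
([:: 0; 7; 1; 4; 2; 6; 3; 8], 5);
([:: 0; 7; 1; 4; 2; 8], 3);
([:: 0; 7; 1; 4; 2; 8; 3; 5], 6);
([:: 0; 7; 1; 4; 2; 8; 3; 6], 5);
([:: 0; 7; 1; 5], 2);
([:: 0; 7; 1; 5; 2; 3], 4);
([:: 0; 7; 1; 5; 2; 3; 4; 6], 8);
([:: 0; 7; 1; 5; 2; 3; 4; 8], 6);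
([:: 0; 7; 1; 5; 2; 4], 3);
([:: 0; 7; 1; 5; 2; 4; 3; 6], 8);
([:: 0; 7; 1; 5; 2; 4; 3; 8], 6);
([:: 0; 7; 1; 5; 2; 6], 3);
([:: 0; 7; 1; 5; 2; 6; 3; 4], 8);
([:: 0; 7; 1; 5; 2; 6; 3; 8], 4);
([:: 0; 7; 1; 5; 2; 8], 3);
([:: 0; 7; 1; 5; 2; 8; 3; 4], 6);
([:: 0; 7; 1; 5; 2; 8; 3; 6], 4);
([:: 0; 7; 1; 6], 2);
([:: 0; 7; 1; 6; 2; 3], 4);
([:: 0; 7; 1; 6; 2; 3; 4; 5], 8);
([:: 0; 7; 1; 6; 2; 3; 4; 8], 5);
([:: 0; 7; 1; 6; 2; 4], 3);
([:: 0; 7; 1; 6; 2; 4; 3; 5], 8);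
([:: 0; 7; 1; 6; 2; 4; 3; 8], 5);
([:: 0; 7; 1; 6; 2; 5], 3);
([:: 0; 7; 1; 6; 2; 5; 3; 4], 8);
([:: 0; 7; 1; 6; 2; 5; 3; 8], 4);
([:: 0; 7; 1; 6; 2; 8], 3);
([:: 0; 7; 1; 6; 2; 8; 3; 4], 5);
([:: 0; 7; 1; 6; 2; 8; 3; 5], 4);
([:: 0; 7; 1; 8], 2);
([:: 0; 7; 1; 8; 2; 3], 4);
([:: 0; 7; 1; 8; 2; 3; 4; 5], 6);
([:: 0; 7; 1; 8; 2; 3; 4; 6], 5);
([:: 0; 7; 1; 8; 2; 4], 3);
([:: 0; 7; 1; 8; 2; 4; 3; 5], 6);
([:: 0; 7; 1; 8; 2; 4; 3; 6], 5);
([:: 0; 7; 1; 8; 2; 5], 3);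
([:: 0; 7; 1; 8; 2; 5; 3; 4], 6);
([:: 0; 7; 1; 8; 2; 5; 3; 6], 4);
([:: 0; 7; 1; 8; 2; 6], 3);
([:: 0; 7; 1; 8; 2; 6; 3; 4], 5);
([:: 0; 7; 1; 8; 2; 6; 3; 5], 4);
([:: 0; 8], 1);
([:: 0; 8; 1; 2], 3);
([:: 0; 8; 1; 2; 3; 4], 6);
([:: 0; 8; 1; 2; 3; 4; 6; 5], 7);
([:: 0; 8; 1; 2; 3; 4; 6; 7], 5);
([:: 0; 8; 1; 2; 3; 5], 4);
([:: 0; 8; 1; 2; 3; 5; 4; 6], 7);
([:: 0; 8; 1; 2; 3; 5; 4; 7], 6);
([:: 0; 8; 1; 2; 3; 6], 4);
([:: 0; 8; 1; 2; 3; 6; 4; 5], 7);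
([:: 0; 8; 1; 2; 3; 6; 4; 7], 5);
([:: 0; 8; 1; 2; 3; 7], 4);
([:: 0; 8; 1; 2; 3; 7; 4; 5], 6);
([:: 0; 8; 1; 2; 3; 7; 4; 6], 5);
([:: 0; 8; 1; 3], 2);
([:: 0; 8; 1; 3; 2; 4], 5);
([:: 0; 8; 1; 3; 2; 4; 5; 6], 7);
([:: 0; 8; 1; 3; 2; 4; 5; 7], 6);
([:: 0; 8; 1; 3; 2; 5], 4);
([:: 0; 8; 1; 3; 2; 5; 4; 6], 7);
([:: 0; 8; 1; 3; 2; 5; 4; 7], 6);
([:: 0; 8; 1; 3; 2; 6], 4);
([:: 0; 8; 1; 3; 2; 6; 4; 5], 7);
([:: 0; 8; 1; 3; 2; 6; 4; 7], 5);
([:: 0; 8; 1; 3; 2; 7], 4);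
([:: 0; 8; 1; 3; 2; 7; 4; 5], 6);
([:: 0; 8; 1; 3; 2; 7; 4; 6], 5);
([:: 0; 8; 1; 4], 2);
([:: 0; 8; 1; 4; 2; 3], 5);
([:: 0; 8; 1; 4; 2; 3; 5; 6], 7);
([:: 0; 8; 1; 4; 2; 3; 5; 7], 6);
([:: 0; 8; 1; 4; 2; 5], 3);
([:: 0; 8; 1; 4; 2; 5; 3; 6], 7);
([:: 0; 8; 1; 4; 2; 5; 3; 7], 6);
([:: 0; 8; 1; 4; 2; 6], 3);
([:: 0; 8; 1; 4; 2; 6; 3; 5], 7);
([:: 0; 8; 1; 4; 2; 6; 3; 7], 5);
([:: 0; 8; 1; 4; 2; 7], 3);
([:: 0; 8; 1; 4; 2; 7; 3; 5], 6);
([:: 0; 8; 1; 4; 2; 7; 3; 6], 5);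
([:: 0; 8; 1; 5], 2);
([:: 0; 8; 1; 5; 2; 3], 4);
([:: 0; 8; 1; 5; 2; 3; 4; 6], 7);
([:: 0; 8; 1; 5; 2; 3; 4; 7], 6);
([:: 0; 8; 1; 5; 2; 4], 3);
([:: 0; 8; 1; 5; 2; 4; 3; 6], 7);
([:: 0; 8; 1; 5; 2; 4; 3; 7], 6);
([:: 0; 8; 1; 5; 2; 6], 3);
([:: 0; 8; 1; 5; 2; 6; 3; 4], 7);
([:: 0; 8; 1; 5; 2; 6; 3; 7], 4);
([:: 0; 8; 1; 5; 2; 7], 3);
([:: 0; 8; 1; 5; 2; 7; 3; 4], 6);
([:: 0; 8; 1; 5; 2; 7; 3; 6], 4);
([:: 0; 8; 1; 6], 2);
([:: 0; 8; 1; 6; 2; 3], 4);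
([:: 0; 8; 1; 6; 2; 3; 4; 5], 7);
([:: 0; 8; 1; 6; 2; 3; 4; 7], 5);
([:: 0; 8; 1; 6; 2; 4], 3);
([:: 0; 8; 1; 6; 2; 4; 3; 5], 7);
([:: 0; 8; 1; 6; 2; 4; 3; 7], 5);
([:: 0; 8; 1; 6; 2; 5], 3);
([:: 0; 8; 1; 6; 2; 5; 3; 4], 7);
([:: 0; 8; 1; 6; 2; 5; 3; 7], 4);
([:: 0; 8; 1; 6; 2; 7], 3);
([:: 0; 8; 1; 6; 2; 7; 3; 4], 5);
([:: 0; 8; 1; 6; 2; 7; 3; 5], 4);
([:: 0; 8; 1; 7], 2);
([:: 0; 8; 1; 7; 2; 3], 4);
([:: 0; 8; 1; 7; 2; 3; 4; 5], 6);
([:: 0; 8; 1; 7; 2; 3; 4; 6], 5);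
([:: 0; 8; 1; 7; 2; 4], 3);
([:: 0; 8; 1; 7; 2; 4; 3; 5], 6);
([:: 0; 8; 1; 7; 2; 4; 3; 6], 5);
([:: 0; 8; 1; 7; 2; 5], 3);
([:: 0; 8; 1; 7; 2; 5; 3; 4], 6);
([:: 0; 8; 1; 7; 2; 5; 3; 6], 4);
([:: 0; 8; 1; 7; 2; 6], 3);
([:: 0; 8; 1; 7; 2; 6; 3; 4], 5);
([:: 0; 8; 1; 7; 2; 6; 3; 5], 4)].
Definition tab1 : seq (seq nat * nat) := [::
([:: 0], 1);
([:: 0; 1; 2], 3);
([:: 0; 1; 2; 3; 4], 8);
([:: 0; 1; 2; 3; 5], 7);
([:: 0; 1; 2; 3; 5; 7; 4], 8);
([:: 0; 1; 2; 3; 5; 7; 6], 4);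
([:: 0; 1; 2; 3; 5; 7; 8], 4);
([:: 0; 1; 2; 3; 6], 4);
([:: 0; 1; 2; 3; 6; 4; 5], 7);
([:: 0; 1; 2; 3; 6; 4; 7], 5);
([:: 0; 1; 2; 3; 6; 4; 8], 5);
([:: 0; 1; 2; 3; 7], 5);
([:: 0; 1; 2; 3; 7; 5; 4], 6);
([:: 0; 1; 2; 3; 7; 5; 6], 4);
([:: 0; 1; 2; 3; 7; 5; 8], 4);
([:: 0; 1; 2; 3; 8], 4);
([:: 0; 1; 2; 3; 8; 4; 5], 7);
([:: 0; 1; 2; 3; 8; 4; 6], 5);
([:: 0; 1; 2; 3; 8; 4; 7], 5);
([:: 0; 1; 3], 2);
([:: 0; 1; 3; 2; 4], 8);
([:: 0; 1; 3; 2; 4; 8; 5], 7);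
([:: 0; 1; 3; 2; 4; 8; 6], 5);
([:: 0; 1; 3; 2; 4; 8; 7], 5);
([:: 0; 1; 3; 2; 5], 7);
([:: 0; 1; 3; 2; 5; 7; 4], 8);
([:: 0; 1; 3; 2; 5; 7; 6], 4);
([:: 0; 1; 3; 2; 5; 7; 8], 4);
([:: 0; 1; 3; 2; 6], 4);
([:: 0; 1; 3; 2; 6; 4; 5], 7);
([:: 0; 1; 3; 2; 6; 4; 7], 5);
([:: 0; 1; 3; 2; 6; 4; 8], 5);
([:: 0; 1; 3; 2; 7], 5);
([:: 0; 1; 3; 2; 7; 5; 4], 6);
([:: 0; 1; 3; 2; 7; 5; 6], 4);
([:: 0; 1; 3; 2; 7; 5; 8], 4);
([:: 0; 1; 3; 2; 8], 4);
([:: 0; 1; 3; 2; 8; 4; 5], 6);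
([:: 0; 1; 3; 2; 8; 4; 6], 5);
([:: 0; 1; 3; 2; 8; 4; 7], 5);
([:: 0; 1; 4], 8);
([:: 0; 1; 4; 8; 2], 3);
([:: 0; 1; 4; 8; 3], 2);
([:: 0; 1; 4; 8; 3; 2; 5], 7);
([:: 0; 1; 4; 8; 3; 2; 6], 5);
([:: 0; 1; 4; 8; 3; 2; 7], 5);
([:: 0; 1; 4; 8; 5], 3);
([:: 0; 1; 4; 8; 6], 2);
([:: 0; 1; 4; 8; 6; 2; 3], 5);
([:: 0; 1; 4; 8; 6; 2; 5], 3);
([:: 0; 1; 4; 8; 6; 2; 7], 3);
([:: 0; 1; 4; 8; 7], 3);
([:: 0; 1; 5], 7);
([:: 0; 1; 5; 7; 2], 3);
([:: 0; 1; 5; 7; 2; 3; 4], 8);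
([:: 0; 1; 5; 7; 2; 3; 6], 4);
([:: 0; 1; 5; 7; 2; 3; 8], 4);
([:: 0; 1; 5; 7; 3], 2);
([:: 0; 1; 5; 7; 3; 2; 4], 8);
([:: 0; 1; 5; 7; 3; 2; 6], 4);
([:: 0; 1; 5; 7; 3; 2; 8], 4);
([:: 0; 1; 5; 7; 4], 8);
([:: 0; 1; 5; 7; 4; 8; 2], 3);
([:: 0; 1; 5; 7; 4; 8; 3], 2);
([:: 0; 1; 5; 7; 4; 8; 6], 2);
([:: 0; 1; 5; 7; 6], 2);
([:: 0; 1; 5; 7; 6; 2; 3], 4);
([:: 0; 1; 5; 7; 6; 2; 4], 3);
([:: 0; 1; 5; 7; 6; 2; 8], 3);
([:: 0; 1; 5; 7; 8], 4);
([:: 0; 1; 5; 7; 8; 4; 2], 3);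
([:: 0; 1; 5; 7; 8; 4; 3], 2);
([:: 0; 1; 5; 7; 8; 4; 6], 2);
([:: 0; 1; 6], 2);
([:: 0; 1; 6; 2; 3], 4);
([:: 0; 1; 6; 2; 3; 4; 5], 7);
([:: 0; 1; 6; 2; 3; 4; 7], 5);
([:: 0; 1; 6; 2; 3; 4; 8], 5);
([:: 0; 1; 6; 2; 4], 8);
([:: 0; 1; 6; 2; 4; 8; 3], 5);
([:: 0; 1; 6; 2; 4; 8; 5], 3);
([:: 0; 1; 6; 2; 4; 8; 7], 3);
([:: 0; 1; 6; 2; 5], 7);
([:: 0; 1; 6; 2; 5; 7; 3], 4);
([:: 0; 1; 6; 2; 5; 7; 4], 3);
([:: 0; 1; 6; 2; 5; 7; 8], 3);
([:: 0; 1; 6; 2; 7], 5);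
([:: 0; 1; 6; 2; 7; 5; 3], 4);
([:: 0; 1; 6; 2; 7; 5; 4], 8);
([:: 0; 1; 6; 2; 7; 5; 8], 4);
([:: 0; 1; 6; 2; 8], 4);
([:: 0; 1; 6; 2; 8; 4; 3], 5);
([:: 0; 1; 6; 2; 8; 4; 5], 7);
([:: 0; 1; 6; 2; 8; 4; 7], 5);
([:: 0; 1; 7], 5);
([:: 0; 1; 7; 5; 2], 3);
([:: 0; 1; 7; 5; 2; 3; 4], 6);
([:: 0; 1; 7; 5; 2; 3; 6], 4);
([:: 0; 1; 7; 5; 2; 3; 8], 4);
([:: 0; 1; 7; 5; 3], 2);
([:: 0; 1; 7; 5; 3; 2; 4], 6);
([:: 0; 1; 7; 5; 3; 2; 6], 4);
([:: 0; 1; 7; 5; 3; 2; 8], 4);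
([:: 0; 1; 7; 5; 4], 6);
([:: 0; 1; 7; 5; 6], 2);
([:: 0; 1; 7; 5; 6; 2; 3], 4);
([:: 0; 1; 7; 5; 6; 2; 4], 8);
([:: 0; 1; 7; 5; 6; 2; 8], 4);
([:: 0; 1; 7; 5; 8], 4);
([:: 0; 1; 7; 5; 8; 4; 2], 3);
([:: 0; 1; 7; 5; 8; 4; 3], 2);
([:: 0; 1; 7; 5; 8; 4; 6], 2);
([:: 0; 1; 8], 4);
([:: 0; 1; 8; 4; 2], 3);
([:: 0; 1; 8; 4; 2; 3; 5], 7);
([:: 0; 1; 8; 4; 2; 3; 6], 5);
([:: 0; 1; 8; 4; 2; 3; 7], 5);
([:: 0; 1; 8; 4; 3], 2);
([:: 0; 1; 8; 4; 3; 2; 5], 6);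
([:: 0; 1; 8; 4; 3; 2; 6], 5);
([:: 0; 1; 8; 4; 3; 2; 7], 5);
([:: 0; 1; 8; 4; 5], 7);
([:: 0; 1; 8; 4; 5; 7; 2], 3);
([:: 0; 1; 8; 4; 5; 7; 3], 2);
([:: 0; 1; 8; 4; 5; 7; 6], 2);
([:: 0; 1; 8; 4; 6], 2);
([:: 0; 1; 8; 4; 6; 2; 3], 5);
([:: 0; 1; 8; 4; 6; 2; 5], 7);
([:: 0; 1; 8; 4; 6; 2; 7], 5);
([:: 0; 1; 8; 4; 7], 5);
([:: 0; 1; 8; 4; 7; 5; 2], 3);
([:: 0; 1; 8; 4; 7; 5; 3], 2);
([:: 0; 1; 8; 4; 7; 5; 6], 2);
([:: 1], 0);
([:: 1; 0; 2], 4);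
([:: 1; 0; 2; 4; 3], 8);
([:: 1; 0; 2; 4; 5], 6);
([:: 1; 0; 2; 4; 5; 6; 3], 8);
([:: 1; 0; 2; 4; 5; 6; 7], 3);
([:: 1; 0; 2; 4; 5; 6; 8], 3);
([:: 1; 0; 2; 4; 6], 5);
([:: 1; 0; 2; 4; 6; 5; 3], 7);
([:: 1; 0; 2; 4; 6; 5; 7], 3);
([:: 1; 0; 2; 4; 6; 5; 8], 3);
([:: 1; 0; 2; 4; 7], 3);
([:: 1; 0; 2; 4; 7; 3; 5], 6);
([:: 1; 0; 2; 4; 7; 3; 6], 5);
([:: 1; 0; 2; 4; 7; 3; 8], 5);
([:: 1; 0; 2; 4; 8], 3);
([:: 1; 0; 2; 4; 8; 3; 5], 6);
([:: 1; 0; 2; 4; 8; 3; 6], 5);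
([:: 1; 0; 2; 4; 8; 3; 7], 5);
([:: 1; 0; 3], 8);
([:: 1; 0; 3; 8; 2], 4);
([:: 1; 0; 3; 8; 4], 2);
([:: 1; 0; 3; 8; 4; 2; 5], 6);
([:: 1; 0; 3; 8; 4; 2; 6], 5);
([:: 1; 0; 3; 8; 4; 2; 7], 5);
([:: 1; 0; 3; 8; 5], 4);
([:: 1; 0; 3; 8; 6], 4);
([:: 1; 0; 3; 8; 7], 2);
([:: 1; 0; 3; 8; 7; 2; 4], 5);
([:: 1; 0; 3; 8; 7; 2; 5], 4);
([:: 1; 0; 3; 8; 7; 2; 6], 4);
([:: 1; 0; 4], 2);
([:: 1; 0; 4; 2; 3], 8);
([:: 1; 0; 4; 2; 3; 8; 5], 6);
([:: 1; 0; 4; 2; 3; 8; 6], 5);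
([:: 1; 0; 4; 2; 3; 8; 7], 5);
([:: 1; 0; 4; 2; 5], 6);
([:: 1; 0; 4; 2; 5; 6; 3], 8);
([:: 1; 0; 4; 2; 5; 6; 7], 3);
([:: 1; 0; 4; 2; 5; 6; 8], 3);
([:: 1; 0; 4; 2; 6], 5);
([:: 1; 0; 4; 2; 6; 5; 3], 7);
([:: 1; 0; 4; 2; 6; 5; 7], 3);
([:: 1; 0; 4; 2; 6; 5; 8], 3);
([:: 1; 0; 4; 2; 7], 3);
([:: 1; 0; 4; 2; 7; 3; 5], 6);
([:: 1; 0; 4; 2; 7; 3; 6], 5);
([:: 1; 0; 4; 2; 7; 3; 8], 5);
([:: 1; 0; 4; 2; 8], 3);
([:: 1; 0; 4; 2; 8; 3; 5], 6);
([:: 1; 0; 4; 2; 8; 3; 6], 5);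
([:: 1; 0; 4; 2; 8; 3; 7], 5);
([:: 1; 0; 5], 6);
([:: 1; 0; 5; 6; 2], 3);
([:: 1; 0; 5; 6; 2; 3; 4], 7);
([:: 1; 0; 5; 6; 2; 3; 7], 4);
([:: 1; 0; 5; 6; 2; 3; 8], 4);
([:: 1; 0; 5; 6; 3], 8);
([:: 1; 0; 5; 6; 3; 8; 2], 4);
([:: 1; 0; 5; 6; 3; 8; 4], 2);
([:: 1; 0; 5; 6; 3; 8; 7], 2);
([:: 1; 0; 5; 6; 4], 2);
([:: 1; 0; 5; 6; 4; 2; 3], 8);
([:: 1; 0; 5; 6; 4; 2; 7], 3);
([:: 1; 0; 5; 6; 4; 2; 8], 3);
([:: 1; 0; 5; 6; 7], 2);
([:: 1; 0; 5; 6; 7; 2; 3], 4);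
([:: 1; 0; 5; 6; 7; 2; 4], 3);
([:: 1; 0; 5; 6; 7; 2; 8], 3);
([:: 1; 0; 5; 6; 8], 3);
([:: 1; 0; 5; 6; 8; 3; 2], 4);
([:: 1; 0; 5; 6; 8; 3; 4], 2);
([:: 1; 0; 5; 6; 8; 3; 7], 2);
([:: 1; 0; 6], 5);
([:: 1; 0; 6; 5; 2], 4);
([:: 1; 0; 6; 5; 2; 4; 3], 7);
([:: 1; 0; 6; 5; 2; 4; 7], 3);
([:: 1; 0; 6; 5; 2; 4; 8], 3);
([:: 1; 0; 6; 5; 3], 7);
([:: 1; 0; 6; 5; 4], 2);
([:: 1; 0; 6; 5; 4; 2; 3], 7);
([:: 1; 0; 6; 5; 4; 2; 7], 3);
([:: 1; 0; 6; 5; 4; 2; 8], 3);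
([:: 1; 0; 6; 5; 7], 2);
([:: 1; 0; 6; 5; 7; 2; 3], 8);
([:: 1; 0; 6; 5; 7; 2; 4], 3);
([:: 1; 0; 6; 5; 7; 2; 8], 3);
([:: 1; 0; 6; 5; 8], 3);
([:: 1; 0; 6; 5; 8; 3; 2], 4);
([:: 1; 0; 6; 5; 8; 3; 4], 2);
([:: 1; 0; 6; 5; 8; 3; 7], 2);
([:: 1; 0; 7], 2);
([:: 1; 0; 7; 2; 3], 8);
([:: 1; 0; 7; 2; 3; 8; 4], 5);
([:: 1; 0; 7; 2; 3; 8; 5], 4);
([:: 1; 0; 7; 2; 3; 8; 6], 4);
([:: 1; 0; 7; 2; 4], 3);
([:: 1; 0; 7; 2; 4; 3; 5], 6);
([:: 1; 0; 7; 2; 4; 3; 6], 5);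
([:: 1; 0; 7; 2; 4; 3; 8], 5);
([:: 1; 0; 7; 2; 5], 6);
([:: 1; 0; 7; 2; 5; 6; 3], 4);
([:: 1; 0; 7; 2; 5; 6; 4], 3);
([:: 1; 0; 7; 2; 5; 6; 8], 3);
([:: 1; 0; 7; 2; 6], 5);
([:: 1; 0; 7; 2; 6; 5; 3], 8);
([:: 1; 0; 7; 2; 6; 5; 4], 3);
([:: 1; 0; 7; 2; 6; 5; 8], 3);
([:: 1; 0; 7; 2; 8], 3);
([:: 1; 0; 7; 2; 8; 3; 4], 5);
([:: 1; 0; 7; 2; 8; 3; 5], 6);
([:: 1; 0; 7; 2; 8; 3; 6], 5);
([:: 1; 0; 8], 3);
([:: 1; 0; 8; 3; 2], 4);
([:: 1; 0; 8; 3; 2; 4; 5], 6);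
([:: 1; 0; 8; 3; 2; 4; 6], 5);
([:: 1; 0; 8; 3; 2; 4; 7], 5);
([:: 1; 0; 8; 3; 4], 2);
([:: 1; 0; 8; 3; 4; 2; 5], 6);
([:: 1; 0; 8; 3; 4; 2; 6], 5);
([:: 1; 0; 8; 3; 4; 2; 7], 5);
([:: 1; 0; 8; 3; 5], 6);
([:: 1; 0; 8; 3; 5; 6; 2], 4);
([:: 1; 0; 8; 3; 5; 6; 4], 2);
([:: 1; 0; 8; 3; 5; 6; 7], 2);
([:: 1; 0; 8; 3; 6], 5);
([:: 1; 0; 8; 3; 6; 5; 2], 4);
([:: 1; 0; 8; 3; 6; 5; 4], 2);
([:: 1; 0; 8; 3; 6; 5; 7], 2);
([:: 1; 0; 8; 3; 7], 2);
([:: 1; 0; 8; 3; 7; 2; 4], 5);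
([:: 1; 0; 8; 3; 7; 2; 5], 6);
([:: 1; 0; 8; 3; 7; 2; 6], 5);
([:: 2], 0);
([:: 2; 0; 1], 4);
([:: 2; 0; 1; 4; 3], 8);
([:: 2; 0; 1; 4; 5], 6);
([:: 2; 0; 1; 4; 5; 6; 3], 8);
([:: 2; 0; 1; 4; 5; 6; 7], 3);
([:: 2; 0; 1; 4; 5; 6; 8], 3);
([:: 2; 0; 1; 4; 6], 5);
([:: 2; 0; 1; 4; 6; 5; 3], 7);
([:: 2; 0; 1; 4; 6; 5; 7], 3);
([:: 2; 0; 1; 4; 6; 5; 8], 3);
([:: 2; 0; 1; 4; 7], 3);
([:: 2; 0; 1; 4; 7; 3; 5], 6);
([:: 2; 0; 1; 4; 7; 3; 6], 5);
([:: 2; 0; 1; 4; 7; 3; 8], 5);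
([:: 2; 0; 1; 4; 8], 3);
([:: 2; 0; 1; 4; 8; 3; 5], 6);
([:: 2; 0; 1; 4; 8; 3; 6], 5);
([:: 2; 0; 1; 4; 8; 3; 7], 5);
([:: 2; 0; 3], 7);
([:: 2; 0; 3; 7; 1], 5);
([:: 2; 0; 3; 7; 4], 5);
([:: 2; 0; 3; 7; 5], 1);
([:: 2; 0; 3; 7; 5; 1; 4], 6);
([:: 2; 0; 3; 7; 5; 1; 6], 4);
([:: 2; 0; 3; 7; 5; 1; 8], 4);
([:: 2; 0; 3; 7; 6], 4);
([:: 2; 0; 3; 7; 6; 4; 1], 5);
([:: 2; 0; 3; 7; 6; 4; 5], 1);
([:: 2; 0; 3; 7; 6; 4; 8], 1);
([:: 2; 0; 3; 7; 8], 1);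
([:: 2; 0; 3; 7; 8; 1; 4], 5);
([:: 2; 0; 3; 7; 8; 1; 5], 4);
([:: 2; 0; 3; 7; 8; 1; 6], 4);
([:: 2; 0; 4], 6);
([:: 2; 0; 4; 6; 1], 3);
([:: 2; 0; 4; 6; 1; 3; 5], 7);
([:: 2; 0; 4; 6; 1; 3; 7], 5);
([:: 2; 0; 4; 6; 1; 3; 8], 5);
([:: 2; 0; 4; 6; 3], 7);
([:: 2; 0; 4; 6; 3; 7; 1], 5);
([:: 2; 0; 4; 6; 3; 7; 5], 1);
([:: 2; 0; 4; 6; 3; 7; 8], 1);
([:: 2; 0; 4; 6; 5], 1);
([:: 2; 0; 4; 6; 5; 1; 3], 7);
([:: 2; 0; 4; 6; 5; 1; 7], 3);
([:: 2; 0; 4; 6; 5; 1; 8], 3);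
([:: 2; 0; 4; 6; 7], 3);
([:: 2; 0; 4; 6; 7; 3; 1], 5);
([:: 2; 0; 4; 6; 7; 3; 5], 1);
([:: 2; 0; 4; 6; 7; 3; 8], 1);
([:: 2; 0; 4; 6; 8], 1);
([:: 2; 0; 4; 6; 8; 1; 3], 5);
([:: 2; 0; 4; 6; 8; 1; 5], 3);
([:: 2; 0; 4; 6; 8; 1; 7], 3);
([:: 2; 0; 5], 1);
([:: 2; 0; 5; 1; 3], 7);
([:: 2; 0; 5; 1; 3; 7; 4], 6);
([:: 2; 0; 5; 1; 3; 7; 6], 4);
([:: 2; 0; 5; 1; 3; 7; 8], 4);
([:: 2; 0; 5; 1; 4], 6);
([:: 2; 0; 5; 1; 4; 6; 3], 7);
([:: 2; 0; 5; 1; 4; 6; 7], 3);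
([:: 2; 0; 5; 1; 4; 6; 8], 3);
([:: 2; 0; 5; 1; 6], 4);
([:: 2; 0; 5; 1; 6; 4; 3], 7);
([:: 2; 0; 5; 1; 6; 4; 7], 3);
([:: 2; 0; 5; 1; 6; 4; 8], 3);
([:: 2; 0; 5; 1; 7], 3);
([:: 2; 0; 5; 1; 7; 3; 4], 6);
([:: 2; 0; 5; 1; 7; 3; 6], 4);
([:: 2; 0; 5; 1; 7; 3; 8], 4);
([:: 2; 0; 5; 1; 8], 3);
([:: 2; 0; 5; 1; 8; 3; 4], 6);
([:: 2; 0; 5; 1; 8; 3; 6], 4);
([:: 2; 0; 5; 1; 8; 3; 7], 4);
([:: 2; 0; 6], 4);
([:: 2; 0; 6; 4; 1], 5);
([:: 2; 0; 6; 4; 1; 5; 3], 7);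
([:: 2; 0; 6; 4; 1; 5; 7], 3);
([:: 2; 0; 6; 4; 1; 5; 8], 3);
([:: 2; 0; 6; 4; 3], 7);
([:: 2; 0; 6; 4; 3; 7; 1], 5);
([:: 2; 0; 6; 4; 3; 7; 5], 1);
([:: 2; 0; 6; 4; 3; 7; 8], 1);
([:: 2; 0; 6; 4; 5], 1);
([:: 2; 0; 6; 4; 5; 1; 3], 7);
([:: 2; 0; 6; 4; 5; 1; 7], 3);
([:: 2; 0; 6; 4; 5; 1; 8], 3);
([:: 2; 0; 6; 4; 7], 3);
([:: 2; 0; 6; 4; 7; 3; 1], 5);
([:: 2; 0; 6; 4; 7; 3; 5], 1);
([:: 2; 0; 6; 4; 7; 3; 8], 1);
([:: 2; 0; 6; 4; 8], 1);
([:: 2; 0; 6; 4; 8; 1; 3], 7);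
([:: 2; 0; 6; 4; 8; 1; 5], 3);
([:: 2; 0; 6; 4; 8; 1; 7], 3);
([:: 2; 0; 7], 3);
([:: 2; 0; 7; 3; 1], 4);
([:: 2; 0; 7; 3; 1; 4; 5], 6);
([:: 2; 0; 7; 3; 1; 4; 6], 5);
([:: 2; 0; 7; 3; 1; 4; 8], 5);
([:: 2; 0; 7; 3; 4], 6);
([:: 2; 0; 7; 3; 4; 6; 1], 5);
([:: 2; 0; 7; 3; 4; 6; 5], 1);
([:: 2; 0; 7; 3; 4; 6; 8], 1);
([:: 2; 0; 7; 3; 5], 1);
([:: 2; 0; 7; 3; 5; 1; 4], 6);
([:: 2; 0; 7; 3; 5; 1; 6], 4);
([:: 2; 0; 7; 3; 5; 1; 8], 4);
([:: 2; 0; 7; 3; 6], 4);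
([:: 2; 0; 7; 3; 6; 4; 1], 5);
([:: 2; 0; 7; 3; 6; 4; 5], 1);
([:: 2; 0; 7; 3; 6; 4; 8], 1);
([:: 2; 0; 7; 3; 8], 1);
([:: 2; 0; 7; 3; 8; 1; 4], 6);
([:: 2; 0; 7; 3; 8; 1; 5], 4);
([:: 2; 0; 7; 3; 8; 1; 6], 4);
([:: 2; 0; 8], 1);
([:: 2; 0; 8; 1; 3], 7);
([:: 2; 0; 8; 1; 3; 7; 4], 5);
([:: 2; 0; 8; 1; 3; 7; 5], 4);
([:: 2; 0; 8; 1; 3; 7; 6], 4);
([:: 2; 0; 8; 1; 4], 6);
([:: 2; 0; 8; 1; 4; 6; 3], 5);
([:: 2; 0; 8; 1; 4; 6; 5], 3);
([:: 2; 0; 8; 1; 4; 6; 7], 3);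
([:: 2; 0; 8; 1; 5], 3);
([:: 2; 0; 8; 1; 5; 3; 4], 6);
([:: 2; 0; 8; 1; 5; 3; 6], 4);
([:: 2; 0; 8; 1; 5; 3; 7], 4);
([:: 2; 0; 8; 1; 6], 4);
([:: 2; 0; 8; 1; 6; 4; 3], 7);
([:: 2; 0; 8; 1; 6; 4; 5], 3);
([:: 2; 0; 8; 1; 6; 4; 7], 3);
([:: 2; 0; 8; 1; 7], 3);
([:: 2; 0; 8; 1; 7; 3; 4], 6);
([:: 2; 0; 8; 1; 7; 3; 5], 4);
([:: 2; 0; 8; 1; 7; 3; 6], 4);
([:: 3], 0);
([:: 3; 0; 1], 8);
([:: 3; 0; 1; 8; 2], 4);
([:: 3; 0; 1; 8; 4], 2);
([:: 3; 0; 1; 8; 4; 2; 5], 6);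
([:: 3; 0; 1; 8; 4; 2; 6], 5);
([:: 3; 0; 1; 8; 4; 2; 7], 5);
([:: 3; 0; 1; 8; 5], 4);
([:: 3; 0; 1; 8; 6], 4);
([:: 3; 0; 1; 8; 7], 2);
([:: 3; 0; 1; 8; 7; 2; 4], 5);
([:: 3; 0; 1; 8; 7; 2; 5], 4);
([:: 3; 0; 1; 8; 7; 2; 6], 4);
([:: 3; 0; 2], 7);
([:: 3; 0; 2; 7; 1], 5);
([:: 3; 0; 2; 7; 4], 5);
([:: 3; 0; 2; 7; 5], 1);
([:: 3; 0; 2; 7; 5; 1; 4], 6);
([:: 3; 0; 2; 7; 5; 1; 6], 4);
([:: 3; 0; 2; 7; 5; 1; 8], 4);
([:: 3; 0; 2; 7; 6], 4);
([:: 3; 0; 2; 7; 6; 4; 1], 5);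
([:: 3; 0; 2; 7; 6; 4; 5], 1);
([:: 3; 0; 2; 7; 6; 4; 8], 1);
([:: 3; 0; 2; 7; 8], 1);
([:: 3; 0; 2; 7; 8; 1; 4], 5);
([:: 3; 0; 2; 7; 8; 1; 5], 4);
([:: 3; 0; 2; 7; 8; 1; 6], 4);
([:: 3; 0; 4], 2);
([:: 3; 0; 4; 2; 1], 8);
([:: 3; 0; 4; 2; 1; 8; 5], 6);
([:: 3; 0; 4; 2; 1; 8; 6], 5);
([:: 3; 0; 4; 2; 1; 8; 7], 5);
([:: 3; 0; 4; 2; 5], 1);
([:: 3; 0; 4; 2; 5; 1; 6], 7);
([:: 3; 0; 4; 2; 5; 1; 7], 6);
([:: 3; 0; 4; 2; 5; 1; 8], 6);
([:: 3; 0; 4; 2; 6], 1);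
([:: 3; 0; 4; 2; 6; 1; 5], 7);
([:: 3; 0; 4; 2; 6; 1; 7], 5);
([:: 3; 0; 4; 2; 6; 1; 8], 5);
([:: 3; 0; 4; 2; 7], 1);
([:: 3; 0; 4; 2; 7; 1; 5], 6);
([:: 3; 0; 4; 2; 7; 1; 6], 5);
([:: 3; 0; 4; 2; 7; 1; 8], 5);
([:: 3; 0; 4; 2; 8], 1);
([:: 3; 0; 4; 2; 8; 1; 5], 6);
([:: 3; 0; 4; 2; 8; 1; 6], 5);
([:: 3; 0; 4; 2; 8; 1; 7], 5);
([:: 3; 0; 5], 1);
([:: 3; 0; 5; 1; 2], 7);
([:: 3; 0; 5; 1; 2; 7; 4], 6);
([:: 3; 0; 5; 1; 2; 7; 6], 4);
([:: 3; 0; 5; 1; 2; 7; 8], 4);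
([:: 3; 0; 5; 1; 4], 2);
([:: 3; 0; 5; 1; 4; 2; 6], 7);
([:: 3; 0; 5; 1; 4; 2; 7], 6);
([:: 3; 0; 5; 1; 4; 2; 8], 6);
([:: 3; 0; 5; 1; 6], 2);
([:: 3; 0; 5; 1; 6; 2; 4], 7);
([:: 3; 0; 5; 1; 6; 2; 7], 4);
([:: 3; 0; 5; 1; 6; 2; 8], 4);
([:: 3; 0; 5; 1; 7], 2);
([:: 3; 0; 5; 1; 7; 2; 4], 6);
([:: 3; 0; 5; 1; 7; 2; 6], 4);
([:: 3; 0; 5; 1; 7; 2; 8], 4);
([:: 3; 0; 5; 1; 8], 2);
([:: 3; 0; 5; 1; 8; 2; 4], 6);
([:: 3; 0; 5; 1; 8; 2; 6], 4);
([:: 3; 0; 5; 1; 8; 2; 7], 4);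
([:: 3; 0; 6], 4);
([:: 3; 0; 6; 4; 1], 8);
([:: 3; 0; 6; 4; 2], 7);
([:: 3; 0; 6; 4; 2; 7; 1], 5);
([:: 3; 0; 6; 4; 2; 7; 5], 1);
([:: 3; 0; 6; 4; 2; 7; 8], 1);
([:: 3; 0; 6; 4; 5], 1);
([:: 3; 0; 6; 4; 5; 1; 2], 7);
([:: 3; 0; 6; 4; 5; 1; 7], 2);
([:: 3; 0; 6; 4; 5; 1; 8], 2);
([:: 3; 0; 6; 4; 7], 2);
([:: 3; 0; 6; 4; 7; 2; 1], 8);
([:: 3; 0; 6; 4; 7; 2; 5], 1);
([:: 3; 0; 6; 4; 7; 2; 8], 1);
([:: 3; 0; 6; 4; 8], 1);
([:: 3; 0; 6; 4; 8; 1; 2], 7);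
([:: 3; 0; 6; 4; 8; 1; 5], 2);
([:: 3; 0; 6; 4; 8; 1; 7], 2);
([:: 3; 0; 7], 2);
([:: 3; 0; 7; 2; 1], 8);
([:: 3; 0; 7; 2; 1; 8; 4], 5);
([:: 3; 0; 7; 2; 1; 8; 5], 4);
([:: 3; 0; 7; 2; 1; 8; 6], 4);
([:: 3; 0; 7; 2; 4], 1);
([:: 3; 0; 7; 2; 4; 1; 5], 6);
([:: 3; 0; 7; 2; 4; 1; 6], 5);
([:: 3; 0; 7; 2; 4; 1; 8], 5);
([:: 3; 0; 7; 2; 5], 1);
([:: 3; 0; 7; 2; 5; 1; 4], 6);
([:: 3; 0; 7; 2; 5; 1; 6], 4);
([:: 3; 0; 7; 2; 5; 1; 8], 4);
([:: 3; 0; 7; 2; 6], 1);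
([:: 3; 0; 7; 2; 6; 1; 4], 5);
([:: 3; 0; 7; 2; 6; 1; 5], 4);
([:: 3; 0; 7; 2; 6; 1; 8], 4);
([:: 3; 0; 7; 2; 8], 1);
([:: 3; 0; 7; 2; 8; 1; 4], 5);
([:: 3; 0; 7; 2; 8; 1; 5], 4);
([:: 3; 0; 7; 2; 8; 1; 6], 4);
([:: 3; 0; 8], 1);
([:: 3; 0; 8; 1; 2], 7);
([:: 3; 0; 8; 1; 2; 7; 4], 5);
([:: 3; 0; 8; 1; 2; 7; 5], 4);
([:: 3; 0; 8; 1; 2; 7; 6], 4);
([:: 3; 0; 8; 1; 4], 2);
([:: 3; 0; 8; 1; 4; 2; 5], 6);
([:: 3; 0; 8; 1; 4; 2; 6], 5);
([:: 3; 0; 8; 1; 4; 2; 7], 5);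
([:: 3; 0; 8; 1; 5], 2);
([:: 3; 0; 8; 1; 5; 2; 4], 6);
([:: 3; 0; 8; 1; 5; 2; 6], 4);
([:: 3; 0; 8; 1; 5; 2; 7], 4);
([:: 3; 0; 8; 1; 6], 2);
([:: 3; 0; 8; 1; 6; 2; 4], 5);
([:: 3; 0; 8; 1; 6; 2; 5], 4);
([:: 3; 0; 8; 1; 6; 2; 7], 4);
([:: 3; 0; 8; 1; 7], 2);
([:: 3; 0; 8; 1; 7; 2; 4], 5);
([:: 3; 0; 8; 1; 7; 2; 5], 4);
([:: 3; 0; 8; 1; 7; 2; 6], 4);
([:: 4], 0);
([:: 4; 0; 1], 2);
([:: 4; 0; 1; 2; 3], 8);
([:: 4; 0; 1; 2; 3; 8; 5], 6);
([:: 4; 0; 1; 2; 3; 8; 6], 5);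
([:: 4; 0; 1; 2; 3; 8; 7], 5);
([:: 4; 0; 1; 2; 5], 6);
([:: 4; 0; 1; 2; 5; 6; 3], 8);
([:: 4; 0; 1; 2; 5; 6; 7], 3);
([:: 4; 0; 1; 2; 5; 6; 8], 3);
([:: 4; 0; 1; 2; 6], 5);
([:: 4; 0; 1; 2; 6; 5; 3], 7);
([:: 4; 0; 1; 2; 6; 5; 7], 3);
([:: 4; 0; 1; 2; 6; 5; 8], 3);
([:: 4; 0; 1; 2; 7], 3);
([:: 4; 0; 1; 2; 7; 3; 5], 6);
([:: 4; 0; 1; 2; 7; 3; 6], 5);
([:: 4; 0; 1; 2; 7; 3; 8], 5);
([:: 4; 0; 1; 2; 8], 3);
([:: 4; 0; 1; 2; 8; 3; 5], 6);
([:: 4; 0; 1; 2; 8; 3; 6], 5);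
([:: 4; 0; 1; 2; 8; 3; 7], 5);
([:: 4; 0; 2], 6);
([:: 4; 0; 2; 6; 1], 3);
([:: 4; 0; 2; 6; 1; 3; 5], 7);
([:: 4; 0; 2; 6; 1; 3; 7], 5);
([:: 4; 0; 2; 6; 1; 3; 8], 5);
([:: 4; 0; 2; 6; 3], 7);
([:: 4; 0; 2; 6; 3; 7; 1], 5);
([:: 4; 0; 2; 6; 3; 7; 5], 1);
([:: 4; 0; 2; 6; 3; 7; 8], 1);
([:: 4; 0; 2; 6; 5], 1);
([:: 4; 0; 2; 6; 5; 1; 3], 7);
([:: 4; 0; 2; 6; 5; 1; 7], 3);
([:: 4; 0; 2; 6; 5; 1; 8], 3);
([:: 4; 0; 2; 6; 7], 3);
([:: 4; 0; 2; 6; 7; 3; 1], 5);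
([:: 4; 0; 2; 6; 7; 3; 5], 1);
([:: 4; 0; 2; 6; 7; 3; 8], 1);
([:: 4; 0; 2; 6; 8], 1);
([:: 4; 0; 2; 6; 8; 1; 3], 5);
([:: 4; 0; 2; 6; 8; 1; 5], 3);
([:: 4; 0; 2; 6; 8; 1; 7], 3);
([:: 4; 0; 3], 2);
([:: 4; 0; 3; 2; 1], 8);
([:: 4; 0; 3; 2; 1; 8; 5], 6);
([:: 4; 0; 3; 2; 1; 8; 6], 5);
([:: 4; 0; 3; 2; 1; 8; 7], 5);
([:: 4; 0; 3; 2; 5], 1);
([:: 4; 0; 3; 2; 5; 1; 6], 7);
([:: 4; 0; 3; 2; 5; 1; 7], 6);
([:: 4; 0; 3; 2; 5; 1; 8], 6);
([:: 4; 0; 3; 2; 6], 1);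
([:: 4; 0; 3; 2; 6; 1; 5], 7);
([:: 4; 0; 3; 2; 6; 1; 7], 5);
([:: 4; 0; 3; 2; 6; 1; 8], 5);
([:: 4; 0; 3; 2; 7], 1);
([:: 4; 0; 3; 2; 7; 1; 5], 6);
([:: 4; 0; 3; 2; 7; 1; 6], 5);
([:: 4; 0; 3; 2; 7; 1; 8], 5);
([:: 4; 0; 3; 2; 8], 1);
([:: 4; 0; 3; 2; 8; 1; 5], 6);
([:: 4; 0; 3; 2; 8; 1; 6], 5);
([:: 4; 0; 3; 2; 8; 1; 7], 5);
([:: 4; 0; 5], 1);
([:: 4; 0; 5; 1; 2], 6);
([:: 4; 0; 5; 1; 2; 6; 3], 7);
([:: 4; 0; 5; 1; 2; 6; 7], 3);
([:: 4; 0; 5; 1; 2; 6; 8], 3);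
([:: 4; 0; 5; 1; 3], 2);
([:: 4; 0; 5; 1; 3; 2; 6], 7);
([:: 4; 0; 5; 1; 3; 2; 7], 6);
([:: 4; 0; 5; 1; 3; 2; 8], 6);
([:: 4; 0; 5; 1; 6], 2);
([:: 4; 0; 5; 1; 6; 2; 3], 7);
([:: 4; 0; 5; 1; 6; 2; 7], 3);
([:: 4; 0; 5; 1; 6; 2; 8], 3);
([:: 4; 0; 5; 1; 7], 2);
([:: 4; 0; 5; 1; 7; 2; 3], 6);
([:: 4; 0; 5; 1; 7; 2; 6], 3);
([:: 4; 0; 5; 1; 7; 2; 8], 3);
([:: 4; 0; 5; 1; 8], 2);
([:: 4; 0; 5; 1; 8; 2; 3], 6);
([:: 4; 0; 5; 1; 8; 2; 6], 3);
([:: 4; 0; 5; 1; 8; 2; 7], 3);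
([:: 4; 0; 6], 2);
([:: 4; 0; 6; 2; 1], 5);
([:: 4; 0; 6; 2; 1; 5; 3], 7);
([:: 4; 0; 6; 2; 1; 5; 7], 3);
([:: 4; 0; 6; 2; 1; 5; 8], 3);
([:: 4; 0; 6; 2; 3], 1);
([:: 4; 0; 6; 2; 3; 1; 5], 7);
([:: 4; 0; 6; 2; 3; 1; 7], 5);
([:: 4; 0; 6; 2; 3; 1; 8], 5);
([:: 4; 0; 6; 2; 5], 1);
([:: 4; 0; 6; 2; 5; 1; 3], 7);
([:: 4; 0; 6; 2; 5; 1; 7], 3);
([:: 4; 0; 6; 2; 5; 1; 8], 3);
([:: 4; 0; 6; 2; 7], 1);
([:: 4; 0; 6; 2; 7; 1; 3], 5);
([:: 4; 0; 6; 2; 7; 1; 5], 3);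
([:: 4; 0; 6; 2; 7; 1; 8], 3);
([:: 4; 0; 6; 2; 8], 1);
([:: 4; 0; 6; 2; 8; 1; 3], 5);
([:: 4; 0; 6; 2; 8; 1; 5], 3);
([:: 4; 0; 6; 2; 8; 1; 7], 3);
([:: 4; 0; 7], 2);
([:: 4; 0; 7; 2; 1], 3);
([:: 4; 0; 7; 2; 1; 3; 5], 6);
([:: 4; 0; 7; 2; 1; 3; 6], 5);
([:: 4; 0; 7; 2; 1; 3; 8], 5);
([:: 4; 0; 7; 2; 3], 1);
([:: 4; 0; 7; 2; 3; 1; 5], 6);
([:: 4; 0; 7; 2; 3; 1; 6], 5);
([:: 4; 0; 7; 2; 3; 1; 8], 5);
([:: 4; 0; 7; 2; 5], 1);
([:: 4; 0; 7; 2; 5; 1; 3], 6);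
([:: 4; 0; 7; 2; 5; 1; 6], 3);
([:: 4; 0; 7; 2; 5; 1; 8], 3);
([:: 4; 0; 7; 2; 6], 1);
([:: 4; 0; 7; 2; 6; 1; 3], 5);
([:: 4; 0; 7; 2; 6; 1; 5], 3);
([:: 4; 0; 7; 2; 6; 1; 8], 3);
([:: 4; 0; 7; 2; 8], 1);
([:: 4; 0; 7; 2; 8; 1; 3], 5);
([:: 4; 0; 7; 2; 8; 1; 5], 3);
([:: 4; 0; 7; 2; 8; 1; 6], 3);
([:: 4; 0; 8], 1);
([:: 4; 0; 8; 1; 2], 6);
([:: 4; 0; 8; 1; 2; 6; 3], 5);
([:: 4; 0; 8; 1; 2; 6; 5], 3);
([:: 4; 0; 8; 1; 2; 6; 7], 3);
([:: 4; 0; 8; 1; 3], 2);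
([:: 4; 0; 8; 1; 3; 2; 5], 6);
([:: 4; 0; 8; 1; 3; 2; 6], 5);
([:: 4; 0; 8; 1; 3; 2; 7], 5);
([:: 4; 0; 8; 1; 5], 2);
([:: 4; 0; 8; 1; 5; 2; 3], 6);
([:: 4; 0; 8; 1; 5; 2; 6], 3);
([:: 4; 0; 8; 1; 5; 2; 7], 3);
([:: 4; 0; 8; 1; 6], 2);
([:: 4; 0; 8; 1; 6; 2; 3], 5);
([:: 4; 0; 8; 1; 6; 2; 5], 3);
([:: 4; 0; 8; 1; 6; 2; 7], 3);
([:: 4; 0; 8; 1; 7], 2);
([:: 4; 0; 8; 1; 7; 2; 3], 5);
([:: 4; 0; 8; 1; 7; 2; 5], 3);
([:: 4; 0; 8; 1; 7; 2; 6], 3);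
([:: 5], 0);
([:: 5; 0; 1], 6);
([:: 5; 0; 1; 6; 2], 3);
([:: 5; 0; 1; 6; 2; 3; 4], 7);
([:: 5; 0; 1; 6; 2; 3; 7], 4);
([:: 5; 0; 1; 6; 2; 3; 8], 4);
([:: 5; 0; 1; 6; 3], 8);
([:: 5; 0; 1; 6; 3; 8; 2], 4);
([:: 5; 0; 1; 6; 3; 8; 4], 2);
([:: 5; 0; 1; 6; 3; 8; 7], 2);
([:: 5; 0; 1; 6; 4], 2);
([:: 5; 0; 1; 6; 4; 2; 3], 8);
([:: 5; 0; 1; 6; 4; 2; 7], 3);
([:: 5; 0; 1; 6; 4; 2; 8], 3);
([:: 5; 0; 1; 6; 7], 2);
([:: 5; 0; 1; 6; 7; 2; 3], 4);
([:: 5; 0; 1; 6; 7; 2; 4], 3);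
([:: 5; 0; 1; 6; 7; 2; 8], 3);
([:: 5; 0; 1; 6; 8], 3);
([:: 5; 0; 1; 6; 8; 3; 2], 4);
([:: 5; 0; 1; 6; 8; 3; 4], 2);
([:: 5; 0; 1; 6; 8; 3; 7], 2);
([:: 5; 0; 2], 1);
([:: 5; 0; 2; 1; 3], 7);
([:: 5; 0; 2; 1; 3; 7; 4], 6);
([:: 5; 0; 2; 1; 3; 7; 6], 4);
([:: 5; 0; 2; 1; 3; 7; 8], 4);
([:: 5; 0; 2; 1; 4], 6);
([:: 5; 0; 2; 1; 4; 6; 3], 7);
([:: 5; 0; 2; 1; 4; 6; 7], 3);
([:: 5; 0; 2; 1; 4; 6; 8], 3);
([:: 5; 0; 2; 1; 6], 4);
([:: 5; 0; 2; 1; 6; 4; 3], 7);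
([:: 5; 0; 2; 1; 6; 4; 7], 3);
([:: 5; 0; 2; 1; 6; 4; 8], 3);
([:: 5; 0; 2; 1; 7], 3);
([:: 5; 0; 2; 1; 7; 3; 4], 6);
([:: 5; 0; 2; 1; 7; 3; 6], 4);
([:: 5; 0; 2; 1; 7; 3; 8], 4);
([:: 5; 0; 2; 1; 8], 3);
([:: 5; 0; 2; 1; 8; 3; 4], 6);
([:: 5; 0; 2; 1; 8; 3; 6], 4);
([:: 5; 0; 2; 1; 8; 3; 7], 4);
([:: 5; 0; 3], 1);
([:: 5; 0; 3; 1; 2], 7);
([:: 5; 0; 3; 1; 2; 7; 4], 6);
([:: 5; 0; 3; 1; 2; 7; 6], 4);
([:: 5; 0; 3; 1; 2; 7; 8], 4);
([:: 5; 0; 3; 1; 4], 2);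
([:: 5; 0; 3; 1; 4; 2; 6], 7);
([:: 5; 0; 3; 1; 4; 2; 7], 6);
([:: 5; 0; 3; 1; 4; 2; 8], 6);
([:: 5; 0; 3; 1; 6], 2);
([:: 5; 0; 3; 1; 6; 2; 4], 7);
([:: 5; 0; 3; 1; 6; 2; 7], 4);
([:: 5; 0; 3; 1; 6; 2; 8], 4);
([:: 5; 0; 3; 1; 7], 2);
([:: 5; 0; 3; 1; 7; 2; 4], 6);
([:: 5; 0; 3; 1; 7; 2; 6], 4);
([:: 5; 0; 3; 1; 7; 2; 8], 4);
([:: 5; 0; 3; 1; 8], 2);
([:: 5; 0; 3; 1; 8; 2; 4], 6);
([:: 5; 0; 3; 1; 8; 2; 6], 4);
([:: 5; 0; 3; 1; 8; 2; 7], 4);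
([:: 5; 0; 4], 1);
([:: 5; 0; 4; 1; 2], 6);
([:: 5; 0; 4; 1; 2; 6; 3], 7);
([:: 5; 0; 4; 1; 2; 6; 7], 3);
([:: 5; 0; 4; 1; 2; 6; 8], 3);
([:: 5; 0; 4; 1; 3], 2);
([:: 5; 0; 4; 1; 3; 2; 6], 7);
([:: 5; 0; 4; 1; 3; 2; 7], 6);
([:: 5; 0; 4; 1; 3; 2; 8], 6);
([:: 5; 0; 4; 1; 6], 2);
([:: 5; 0; 4; 1; 6; 2; 3], 7);
([:: 5; 0; 4; 1; 6; 2; 7], 3);
([:: 5; 0; 4; 1; 6; 2; 8], 3);
([:: 5; 0; 4; 1; 7], 2);
([:: 5; 0; 4; 1; 7; 2; 3], 6);
([:: 5; 0; 4; 1; 7; 2; 6], 3);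
([:: 5; 0; 4; 1; 7; 2; 8], 3);
([:: 5; 0; 4; 1; 8], 2);
([:: 5; 0; 4; 1; 8; 2; 3], 6);
([:: 5; 0; 4; 1; 8; 2; 6], 3);
([:: 5; 0; 4; 1; 8; 2; 7], 3);
([:: 5; 0; 6], 1);
([:: 5; 0; 6; 1; 2], 4);
([:: 5; 0; 6; 1; 2; 4; 3], 7);
([:: 5; 0; 6; 1; 2; 4; 7], 3);
([:: 5; 0; 6; 1; 2; 4; 8], 3);
([:: 5; 0; 6; 1; 3], 2);
([:: 5; 0; 6; 1; 3; 2; 4], 7);
([:: 5; 0; 6; 1; 3; 2; 7], 4);
([:: 5; 0; 6; 1; 3; 2; 8], 4);
([:: 5; 0; 6; 1; 4], 2);
([:: 5; 0; 6; 1; 4; 2; 3], 7);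
([:: 5; 0; 6; 1; 4; 2; 7], 3);
([:: 5; 0; 6; 1; 4; 2; 8], 3);
([:: 5; 0; 6; 1; 7], 2);
([:: 5; 0; 6; 1; 7; 2; 3], 4);
([:: 5; 0; 6; 1; 7; 2; 4], 3);
([:: 5; 0; 6; 1; 7; 2; 8], 3);
([:: 5; 0; 6; 1; 8], 2);
([:: 5; 0; 6; 1; 8; 2; 3], 4);
([:: 5; 0; 6; 1; 8; 2; 4], 3);
([:: 5; 0; 6; 1; 8; 2; 7], 3);
([:: 5; 0; 7], 1);
([:: 5; 0; 7; 1; 2], 3);
([:: 5; 0; 7; 1; 2; 3; 4], 6);
([:: 5; 0; 7; 1; 2; 3; 6], 4);
([:: 5; 0; 7; 1; 2; 3; 8], 4);
([:: 5; 0; 7; 1; 3], 2);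
([:: 5; 0; 7; 1; 3; 2; 4], 6);
([:: 5; 0; 7; 1; 3; 2; 6], 4);
([:: 5; 0; 7; 1; 3; 2; 8], 4);
([:: 5; 0; 7; 1; 4], 2);
([:: 5; 0; 7; 1; 4; 2; 3], 6);
([:: 5; 0; 7; 1; 4; 2; 6], 3);
([:: 5; 0; 7; 1; 4; 2; 8], 3);
([:: 5; 0; 7; 1; 6], 2);
([:: 5; 0; 7; 1; 6; 2; 3], 4);
([:: 5; 0; 7; 1; 6; 2; 4], 3);
([:: 5; 0; 7; 1; 6; 2; 8], 3);
([:: 5; 0; 7; 1; 8], 2);
([:: 5; 0; 7; 1; 8; 2; 3], 4);
([:: 5; 0; 7; 1; 8; 2; 4], 3);
([:: 5; 0; 7; 1; 8; 2; 6], 3);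
([:: 5; 0; 8], 1);
([:: 5; 0; 8; 1; 2], 3);
([:: 5; 0; 8; 1; 2; 3; 4], 6);
([:: 5; 0; 8; 1; 2; 3; 6], 4);
([:: 5; 0; 8; 1; 2; 3; 7], 4);
([:: 5; 0; 8; 1; 3], 2);
([:: 5; 0; 8; 1; 3; 2; 4], 6);
([:: 5; 0; 8; 1; 3; 2; 6], 4);
([:: 5; 0; 8; 1; 3; 2; 7], 4);
([:: 5; 0; 8; 1; 4], 2);
([:: 5; 0; 8; 1; 4; 2; 3], 6);
([:: 5; 0; 8; 1; 4; 2; 6], 3);
([:: 5; 0; 8; 1; 4; 2; 7], 3);
([:: 5; 0; 8; 1; 6], 2);
([:: 5; 0; 8; 1; 6; 2; 3], 4);
([:: 5; 0; 8; 1; 6; 2; 4], 3);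
([:: 5; 0; 8; 1; 6; 2; 7], 3);
([:: 5; 0; 8; 1; 7], 2);
([:: 5; 0; 8; 1; 7; 2; 3], 4);
([:: 5; 0; 8; 1; 7; 2; 4], 3);
([:: 5; 0; 8; 1; 7; 2; 6], 3);
([:: 6], 0);
([:: 6; 0; 1], 5);
([:: 6; 0; 1; 5; 2], 4);
([:: 6; 0; 1; 5; 2; 4; 3], 7);
([:: 6; 0; 1; 5; 2; 4; 7], 3);
([:: 6; 0; 1; 5; 2; 4; 8], 3);
([:: 6; 0; 1; 5; 3], 7);
([:: 6; 0; 1; 5; 4], 2);
([:: 6; 0; 1; 5; 4; 2; 3], 7);
([:: 6; 0; 1; 5; 4; 2; 7], 3);
([:: 6; 0; 1; 5; 4; 2; 8], 3);
([:: 6; 0; 1; 5; 7], 2);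
([:: 6; 0; 1; 5; 7; 2; 3], 8);
([:: 6; 0; 1; 5; 7; 2; 4], 3);
([:: 6; 0; 1; 5; 7; 2; 8], 3);
([:: 6; 0; 1; 5; 8], 3);
([:: 6; 0; 1; 5; 8; 3; 2], 4);
([:: 6; 0; 1; 5; 8; 3; 4], 2);
([:: 6; 0; 1; 5; 8; 3; 7], 2);
([:: 6; 0; 2], 4);
([:: 6; 0; 2; 4; 1], 5);
([:: 6; 0; 2; 4; 1; 5; 3], 7);
([:: 6; 0; 2; 4; 1; 5; 7], 3);
([:: 6; 0; 2; 4; 1; 5; 8], 3);
([:: 6; 0; 2; 4; 3], 7);
([:: 6; 0; 2; 4; 3; 7; 1], 5);
([:: 6; 0; 2; 4; 3; 7; 5], 1);
([:: 6; 0; 2; 4; 3; 7; 8], 1);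
([:: 6; 0; 2; 4; 5], 1);
([:: 6; 0; 2; 4; 5; 1; 3], 7);
([:: 6; 0; 2; 4; 5; 1; 7], 3);
([:: 6; 0; 2; 4; 5; 1; 8], 3);
([:: 6; 0; 2; 4; 7], 3);
([:: 6; 0; 2; 4; 7; 3; 1], 5);
([:: 6; 0; 2; 4; 7; 3; 5], 1);
([:: 6; 0; 2; 4; 7; 3; 8], 1);
([:: 6; 0; 2; 4; 8], 1);
([:: 6; 0; 2; 4; 8; 1; 3], 7);
([:: 6; 0; 2; 4; 8; 1; 5], 3);
([:: 6; 0; 2; 4; 8; 1; 7], 3);
([:: 6; 0; 3], 4);
([:: 6; 0; 3; 4; 1], 8);
([:: 6; 0; 3; 4; 2], 7);
([:: 6; 0; 3; 4; 2; 7; 1], 5);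
([:: 6; 0; 3; 4; 2; 7; 5], 1);
([:: 6; 0; 3; 4; 2; 7; 8], 1);
([:: 6; 0; 3; 4; 5], 1);
([:: 6; 0; 3; 4; 5; 1; 2], 7);
([:: 6; 0; 3; 4; 5; 1; 7], 2);
([:: 6; 0; 3; 4; 5; 1; 8], 2);
([:: 6; 0; 3; 4; 7], 2);
([:: 6; 0; 3; 4; 7; 2; 1], 8);
([:: 6; 0; 3; 4; 7; 2; 5], 1);
([:: 6; 0; 3; 4; 7; 2; 8], 1);
([:: 6; 0; 3; 4; 8], 1);
([:: 6; 0; 3; 4; 8; 1; 2], 7);
([:: 6; 0; 3; 4; 8; 1; 5], 2);
([:: 6; 0; 3; 4; 8; 1; 7], 2);
([:: 6; 0; 4], 2);
([:: 6; 0; 4; 2; 1], 5);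
([:: 6; 0; 4; 2; 1; 5; 3], 7);
([:: 6; 0; 4; 2; 1; 5; 7], 3);
([:: 6; 0; 4; 2; 1; 5; 8], 3);
([:: 6; 0; 4; 2; 3], 1);
([:: 6; 0; 4; 2; 3; 1; 5], 7);
([:: 6; 0; 4; 2; 3; 1; 7], 5);
([:: 6; 0; 4; 2; 3; 1; 8], 5);
([:: 6; 0; 4; 2; 5], 1);
([:: 6; 0; 4; 2; 5; 1; 3], 7);
([:: 6; 0; 4; 2; 5; 1; 7], 3);
([:: 6; 0; 4; 2; 5; 1; 8], 3);
([:: 6; 0; 4; 2; 7], 1);
([:: 6; 0; 4; 2; 7; 1; 3], 5);
([:: 6; 0; 4; 2; 7; 1; 5], 3);
([:: 6; 0; 4; 2; 7; 1; 8], 3);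
([:: 6; 0; 4; 2; 8], 1);
([:: 6; 0; 4; 2; 8; 1; 3], 5);
([:: 6; 0; 4; 2; 8; 1; 5], 3);
([:: 6; 0; 4; 2; 8; 1; 7], 3);
([:: 6; 0; 5], 1);
([:: 6; 0; 5; 1; 2], 4);
([:: 6; 0; 5; 1; 2; 4; 3], 7);
([:: 6; 0; 5; 1; 2; 4; 7], 3);
([:: 6; 0; 5; 1; 2; 4; 8], 3);
([:: 6; 0; 5; 1; 3], 2);
([:: 6; 0; 5; 1; 3; 2; 4], 7);
([:: 6; 0; 5; 1; 3; 2; 7], 4);
([:: 6; 0; 5; 1; 3; 2; 8], 4);
([:: 6; 0; 5; 1; 4], 2);
([:: 6; 0; 5; 1; 4; 2; 3], 7);
([:: 6; 0; 5; 1; 4; 2; 7], 3);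
([:: 6; 0; 5; 1; 4; 2; 8], 3);
([:: 6; 0; 5; 1; 7], 2);
([:: 6; 0; 5; 1; 7; 2; 3], 4);
([:: 6; 0; 5; 1; 7; 2; 4], 3);
([:: 6; 0; 5; 1; 7; 2; 8], 3);
([:: 6; 0; 5; 1; 8], 2);
([:: 6; 0; 5; 1; 8; 2; 3], 4);
([:: 6; 0; 5; 1; 8; 2; 4], 3);
([:: 6; 0; 5; 1; 8; 2; 7], 3);
([:: 6; 0; 7], 2);
([:: 6; 0; 7; 2; 1], 5);
([:: 6; 0; 7; 2; 1; 5; 3], 8);
([:: 6; 0; 7; 2; 1; 5; 4], 3);
([:: 6; 0; 7; 2; 1; 5; 8], 3);
([:: 6; 0; 7; 2; 3], 1);
([:: 6; 0; 7; 2; 3; 1; 4], 5);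
([:: 6; 0; 7; 2; 3; 1; 5], 4);
([:: 6; 0; 7; 2; 3; 1; 8], 4);
([:: 6; 0; 7; 2; 4], 1);
([:: 6; 0; 7; 2; 4; 1; 3], 5);
([:: 6; 0; 7; 2; 4; 1; 5], 3);
([:: 6; 0; 7; 2; 4; 1; 8], 3);
([:: 6; 0; 7; 2; 5], 1);
([:: 6; 0; 7; 2; 5; 1; 3], 4);
([:: 6; 0; 7; 2; 5; 1; 4], 3);
([:: 6; 0; 7; 2; 5; 1; 8], 3);
([:: 6; 0; 7; 2; 8], 1);
([:: 6; 0; 7; 2; 8; 1; 3], 4);
([:: 6; 0; 7; 2; 8; 1; 4], 3);
([:: 6; 0; 7; 2; 8; 1; 5], 3);
([:: 6; 0; 8], 1);
([:: 6; 0; 8; 1; 2], 4);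
([:: 6; 0; 8; 1; 2; 4; 3], 7);
([:: 6; 0; 8; 1; 2; 4; 5], 3);
([:: 6; 0; 8; 1; 2; 4; 7], 3);
([:: 6; 0; 8; 1; 3], 2);
([:: 6; 0; 8; 1; 3; 2; 4], 5);
([:: 6; 0; 8; 1; 3; 2; 5], 4);
([:: 6; 0; 8; 1; 3; 2; 7], 4);
([:: 6; 0; 8; 1; 4], 2);
([:: 6; 0; 8; 1; 4; 2; 3], 5);
([:: 6; 0; 8; 1; 4; 2; 5], 3);
([:: 6; 0; 8; 1; 4; 2; 7], 3);
([:: 6; 0; 8; 1; 5], 2);
([:: 6; 0; 8; 1; 5; 2; 3], 4);
([:: 6; 0; 8; 1; 5; 2; 4], 3);
([:: 6; 0; 8; 1; 5; 2; 7], 3);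
([:: 6; 0; 8; 1; 7], 2);
([:: 6; 0; 8; 1; 7; 2; 3], 4);
([:: 6; 0; 8; 1; 7; 2; 4], 3);
([:: 6; 0; 8; 1; 7; 2; 5], 3);
([:: 7], 0);
([:: 7; 0; 1], 2);
([:: 7; 0; 1; 2; 3], 8);
([:: 7; 0; 1; 2; 3; 8; 4], 5);
([:: 7; 0; 1; 2; 3; 8; 5], 4);
([:: 7; 0; 1; 2; 3; 8; 6], 4);
([:: 7; 0; 1; 2; 4], 3);
([:: 7; 0; 1; 2; 4; 3; 5], 6);
([:: 7; 0; 1; 2; 4; 3; 6], 5);
([:: 7; 0; 1; 2; 4; 3; 8], 5);
([:: 7; 0; 1; 2; 5], 6);
([:: 7; 0; 1; 2; 5; 6; 3], 4);
([:: 7; 0; 1; 2; 5; 6; 4], 3);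
([:: 7; 0; 1; 2; 5; 6; 8], 3);
([:: 7; 0; 1; 2; 6], 5);
([:: 7; 0; 1; 2; 6; 5; 3], 8);
([:: 7; 0; 1; 2; 6; 5; 4], 3);
([:: 7; 0; 1; 2; 6; 5; 8], 3);
([:: 7; 0; 1; 2; 8], 3);
([:: 7; 0; 1; 2; 8; 3; 4], 5);
([:: 7; 0; 1; 2; 8; 3; 5], 6);
([:: 7; 0; 1; 2; 8; 3; 6], 5);
([:: 7; 0; 2], 3);
([:: 7; 0; 2; 3; 1], 4);
([:: 7; 0; 2; 3; 1; 4; 5], 6);
([:: 7; 0; 2; 3; 1; 4; 6], 5);
([:: 7; 0; 2; 3; 1; 4; 8], 5);
([:: 7; 0; 2; 3; 4], 6);
([:: 7; 0; 2; 3; 4; 6; 1], 5);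
([:: 7; 0; 2; 3; 4; 6; 5], 1);
([:: 7; 0; 2; 3; 4; 6; 8], 1);
([:: 7; 0; 2; 3; 5], 1);
([:: 7; 0; 2; 3; 5; 1; 4], 6);
([:: 7; 0; 2; 3; 5; 1; 6], 4);
([:: 7; 0; 2; 3; 5; 1; 8], 4);
([:: 7; 0; 2; 3; 6], 4);
([:: 7; 0; 2; 3; 6; 4; 1], 5);
([:: 7; 0; 2; 3; 6; 4; 5], 1);
([:: 7; 0; 2; 3; 6; 4; 8], 1);
([:: 7; 0; 2; 3; 8], 1);
([:: 7; 0; 2; 3; 8; 1; 4], 6);
([:: 7; 0; 2; 3; 8; 1; 5], 4);
([:: 7; 0; 2; 3; 8; 1; 6], 4);
([:: 7; 0; 3], 2);
([:: 7; 0; 3; 2; 1], 8);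
([:: 7; 0; 3; 2; 1; 8; 4], 5);
([:: 7; 0; 3; 2; 1; 8; 5], 4);
([:: 7; 0; 3; 2; 1; 8; 6], 4);
([:: 7; 0; 3; 2; 4], 1);
([:: 7; 0; 3; 2; 4; 1; 5], 6);
([:: 7; 0; 3; 2; 4; 1; 6], 5);
([:: 7; 0; 3; 2; 4; 1; 8], 5);
([:: 7; 0; 3; 2; 5], 1);
([:: 7; 0; 3; 2; 5; 1; 4], 6);
([:: 7; 0; 3; 2; 5; 1; 6], 4);
([:: 7; 0; 3; 2; 5; 1; 8], 4);
([:: 7; 0; 3; 2; 6], 1);
([:: 7; 0; 3; 2; 6; 1; 4], 5);
([:: 7; 0; 3; 2; 6; 1; 5], 4);
([:: 7; 0; 3; 2; 6; 1; 8], 4);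
([:: 7; 0; 3; 2; 8], 1);
([:: 7; 0; 3; 2; 8; 1; 4], 5);
([:: 7; 0; 3; 2; 8; 1; 5], 4);
([:: 7; 0; 3; 2; 8; 1; 6], 4);
([:: 7; 0; 4], 2);
([:: 7; 0; 4; 2; 1], 3);
([:: 7; 0; 4; 2; 1; 3; 5], 6);
([:: 7; 0; 4; 2; 1; 3; 6], 5);
([:: 7; 0; 4; 2; 1; 3; 8], 5);
([:: 7; 0; 4; 2; 3], 1);
([:: 7; 0; 4; 2; 3; 1; 5], 6);
([:: 7; 0; 4; 2; 3; 1; 6], 5);
([:: 7; 0; 4; 2; 3; 1; 8], 5);
([:: 7; 0; 4; 2; 5], 1);
([:: 7; 0; 4; 2; 5; 1; 3], 6);
([:: 7; 0; 4; 2; 5; 1; 6], 3);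
([:: 7; 0; 4; 2; 5; 1; 8], 3);
([:: 7; 0; 4; 2; 6], 1);
([:: 7; 0; 4; 2; 6; 1; 3], 5);
([:: 7; 0; 4; 2; 6; 1; 5], 3);
([:: 7; 0; 4; 2; 6; 1; 8], 3);
([:: 7; 0; 4; 2; 8], 1);
([:: 7; 0; 4; 2; 8; 1; 3], 5);
([:: 7; 0; 4; 2; 8; 1; 5], 3);
([:: 7; 0; 4; 2; 8; 1; 6], 3);
([:: 7; 0; 5], 1);
([:: 7; 0; 5; 1; 2], 3);
([:: 7; 0; 5; 1; 2; 3; 4], 6);
([:: 7; 0; 5; 1; 2; 3; 6], 4);
([:: 7; 0; 5; 1; 2; 3; 8], 4);
([:: 7; 0; 5; 1; 3], 2);
([:: 7; 0; 5; 1; 3; 2; 4], 6);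
([:: 7; 0; 5; 1; 3; 2; 6], 4);
([:: 7; 0; 5; 1; 3; 2; 8], 4);
([:: 7; 0; 5; 1; 4], 2);
([:: 7; 0; 5; 1; 4; 2; 3], 6);
([:: 7; 0; 5; 1; 4; 2; 6], 3);
([:: 7; 0; 5; 1; 4; 2; 8], 3);
([:: 7; 0; 5; 1; 6], 2);
([:: 7; 0; 5; 1; 6; 2; 3], 4);
([:: 7; 0; 5; 1; 6; 2; 4], 3);
([:: 7; 0; 5; 1; 6; 2; 8], 3);
([:: 7; 0; 5; 1; 8], 2);
([:: 7; 0; 5; 1; 8; 2; 3], 4);
([:: 7; 0; 5; 1; 8; 2; 4], 3);
([:: 7; 0; 5; 1; 8; 2; 6], 3);
([:: 7; 0; 6], 2);
([:: 7; 0; 6; 2; 1], 5);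
([:: 7; 0; 6; 2; 1; 5; 3], 8);
([:: 7; 0; 6; 2; 1; 5; 4], 3);
([:: 7; 0; 6; 2; 1; 5; 8], 3);
([:: 7; 0; 6; 2; 3], 1);
([:: 7; 0; 6; 2; 3; 1; 4], 5);
([:: 7; 0; 6; 2; 3; 1; 5], 4);
([:: 7; 0; 6; 2; 3; 1; 8], 4);
([:: 7; 0; 6; 2; 4], 1);
([:: 7; 0; 6; 2; 4; 1; 3], 5);
([:: 7; 0; 6; 2; 4; 1; 5], 3);
([:: 7; 0; 6; 2; 4; 1; 8], 3);
([:: 7; 0; 6; 2; 5], 1);
([:: 7; 0; 6; 2; 5; 1; 3], 4);
([:: 7; 0; 6; 2; 5; 1; 4], 3);
([:: 7; 0; 6; 2; 5; 1; 8], 3);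
([:: 7; 0; 6; 2; 8], 1);
([:: 7; 0; 6; 2; 8; 1; 3], 4);
([:: 7; 0; 6; 2; 8; 1; 4], 3);
([:: 7; 0; 6; 2; 8; 1; 5], 3);
([:: 7; 0; 8], 1);
([:: 7; 0; 8; 1; 2], 3);
([:: 7; 0; 8; 1; 2; 3; 4], 6);
([:: 7; 0; 8; 1; 2; 3; 5], 4);
([:: 7; 0; 8; 1; 2; 3; 6], 4);
([:: 7; 0; 8; 1; 3], 2);
([:: 7; 0; 8; 1; 3; 2; 4], 5);
([:: 7; 0; 8; 1; 3; 2; 5], 4);
([:: 7; 0; 8; 1; 3; 2; 6], 4);
([:: 7; 0; 8; 1; 4], 2);
([:: 7; 0; 8; 1; 4; 2; 3], 5);
([:: 7; 0; 8; 1; 4; 2; 5], 3);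
([:: 7; 0; 8; 1; 4; 2; 6], 3);
([:: 7; 0; 8; 1; 5], 2);
([:: 7; 0; 8; 1; 5; 2; 3], 4);
([:: 7; 0; 8; 1; 5; 2; 4], 3);
([:: 7; 0; 8; 1; 5; 2; 6], 3);
([:: 7; 0; 8; 1; 6], 2);
([:: 7; 0; 8; 1; 6; 2; 3], 4);
([:: 7; 0; 8; 1; 6; 2; 4], 3);
([:: 7; 0; 8; 1; 6; 2; 5], 3);
([:: 8], 0);
([:: 8; 0; 1], 3);
([:: 8; 0; 1; 3; 2], 4);
([:: 8; 0; 1; 3; 2; 4; 5], 6);
([:: 8; 0; 1; 3; 2; 4; 6], 5);
([:: 8; 0; 1; 3; 2; 4; 7], 5);
([:: 8; 0; 1; 3; 4], 2);
([:: 8; 0; 1; 3; 4; 2; 5], 6);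
([:: 8; 0; 1; 3; 4; 2; 6], 5);
([:: 8; 0; 1; 3; 4; 2; 7], 5);
([:: 8; 0; 1; 3; 5], 6);
([:: 8; 0; 1; 3; 5; 6; 2], 4);
([:: 8; 0; 1; 3; 5; 6; 4], 2);
([:: 8; 0; 1; 3; 5; 6; 7], 2);
([:: 8; 0; 1; 3; 6], 5);
([:: 8; 0; 1; 3; 6; 5; 2], 4);
([:: 8; 0; 1; 3; 6; 5; 4], 2);
([:: 8; 0; 1; 3; 6; 5; 7], 2);
([:: 8; 0; 1; 3; 7], 2);
([:: 8; 0; 1; 3; 7; 2; 4], 5);
([:: 8; 0; 1; 3; 7; 2; 5], 6);
([:: 8; 0; 1; 3; 7; 2; 6], 5);
([:: 8; 0; 2], 1);
([:: 8; 0; 2; 1; 3], 7);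
([:: 8; 0; 2; 1; 3; 7; 4], 5);
([:: 8; 0; 2; 1; 3; 7; 5], 4);
([:: 8; 0; 2; 1; 3; 7; 6], 4);
([:: 8; 0; 2; 1; 4], 6);
([:: 8; 0; 2; 1; 4; 6; 3], 5);
([:: 8; 0; 2; 1; 4; 6; 5], 3);
([:: 8; 0; 2; 1; 4; 6; 7], 3);
([:: 8; 0; 2; 1; 5], 3);
([:: 8; 0; 2; 1; 5; 3; 4], 6);
([:: 8; 0; 2; 1; 5; 3; 6], 4);
([:: 8; 0; 2; 1; 5; 3; 7], 4);
([:: 8; 0; 2; 1; 6], 4);
([:: 8; 0; 2; 1; 6; 4; 3], 7);
([:: 8; 0; 2; 1; 6; 4; 5], 3);
([:: 8; 0; 2; 1; 6; 4; 7], 3);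
([:: 8; 0; 2; 1; 7], 3);
([:: 8; 0; 2; 1; 7; 3; 4], 6);
([:: 8; 0; 2; 1; 7; 3; 5], 4);
([:: 8; 0; 2; 1; 7; 3; 6], 4);
([:: 8; 0; 3], 1);
([:: 8; 0; 3; 1; 2], 7);
([:: 8; 0; 3; 1; 2; 7; 4], 5);
([:: 8; 0; 3; 1; 2; 7; 5], 4);
([:: 8; 0; 3; 1; 2; 7; 6], 4);
([:: 8; 0; 3; 1; 4], 2);
([:: 8; 0; 3; 1; 4; 2; 5], 6);
([:: 8; 0; 3; 1; 4; 2; 6], 5);
([:: 8; 0; 3; 1; 4; 2; 7], 5);
([:: 8; 0; 3; 1; 5], 2);
([:: 8; 0; 3; 1; 5; 2; 4], 6);
([:: 8; 0; 3; 1; 5; 2; 6], 4);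
([:: 8; 0; 3; 1; 5; 2; 7], 4);
([:: 8; 0; 3; 1; 6], 2);
([:: 8; 0; 3; 1; 6; 2; 4], 5);
([:: 8; 0; 3; 1; 6; 2; 5], 4);
([:: 8; 0; 3; 1; 6; 2; 7], 4);
([:: 8; 0; 3; 1; 7], 2);
([:: 8; 0; 3; 1; 7; 2; 4], 5);
([:: 8; 0; 3; 1; 7; 2; 5], 4);
([:: 8; 0; 3; 1; 7; 2; 6], 4);
([:: 8; 0; 4], 1);
([:: 8; 0; 4; 1; 2], 6);
([:: 8; 0; 4; 1; 2; 6; 3], 5);
([:: 8; 0; 4; 1; 2; 6; 5], 3);
([:: 8; 0; 4; 1; 2; 6; 7], 3);
([:: 8; 0; 4; 1; 3], 2);
([:: 8; 0; 4; 1; 3; 2; 5], 6);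
([:: 8; 0; 4; 1; 3; 2; 6], 5);
([:: 8; 0; 4; 1; 3; 2; 7], 5);
([:: 8; 0; 4; 1; 5], 2);
([:: 8; 0; 4; 1; 5; 2; 3], 6);
([:: 8; 0; 4; 1; 5; 2; 6], 3);
([:: 8; 0; 4; 1; 5; 2; 7], 3);
([:: 8; 0; 4; 1; 6], 2);
([:: 8; 0; 4; 1; 6; 2; 3], 5);
([:: 8; 0; 4; 1; 6; 2; 5], 3);
([:: 8; 0; 4; 1; 6; 2; 7], 3);
([:: 8; 0; 4; 1; 7], 2);
([:: 8; 0; 4; 1; 7; 2; 3], 5);
([:: 8; 0; 4; 1; 7; 2; 5], 3);
([:: 8; 0; 4; 1; 7; 2; 6], 3);
([:: 8; 0; 5], 1);
([:: 8; 0; 5; 1; 2], 3);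
([:: 8; 0; 5; 1; 2; 3; 4], 6);
([:: 8; 0; 5; 1; 2; 3; 6], 4);
([:: 8; 0; 5; 1; 2; 3; 7], 4);
([:: 8; 0; 5; 1; 3], 2);
([:: 8; 0; 5; 1; 3; 2; 4], 6);
([:: 8; 0; 5; 1; 3; 2; 6], 4);
([:: 8; 0; 5; 1; 3; 2; 7], 4);
([:: 8; 0; 5; 1; 4], 2);
([:: 8; 0; 5; 1; 4; 2; 3], 6);
([:: 8; 0; 5; 1; 4; 2; 6], 3);
([:: 8; 0; 5; 1; 4; 2; 7], 3);
([:: 8; 0; 5; 1; 6], 2);
([:: 8; 0; 5; 1; 6; 2; 3], 4);
([:: 8; 0; 5; 1; 6; 2; 4], 3);
([:: 8; 0; 5; 1; 6; 2; 7], 3);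
([:: 8; 0; 5; 1; 7], 2);
([:: 8; 0; 5; 1; 7; 2; 3], 4);
([:: 8; 0; 5; 1; 7; 2; 4], 3);
([:: 8; 0; 5; 1; 7; 2; 6], 3);
([:: 8; 0; 6], 1);
([:: 8; 0; 6; 1; 2], 4);
([:: 8; 0; 6; 1; 2; 4; 3], 7);
([:: 8; 0; 6; 1; 2; 4; 5], 3);
([:: 8; 0; 6; 1; 2; 4; 7], 3);
([:: 8; 0; 6; 1; 3], 2);
([:: 8; 0; 6; 1; 3; 2; 4], 5);
([:: 8; 0; 6; 1; 3; 2; 5], 4);
([:: 8; 0; 6; 1; 3; 2; 7], 4);
([:: 8; 0; 6; 1; 4], 2);
([:: 8; 0; 6; 1; 4; 2; 3], 5);
([:: 8; 0; 6; 1; 4; 2; 5], 3);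
([:: 8; 0; 6; 1; 4; 2; 7], 3);
([:: 8; 0; 6; 1; 5], 2);
([:: 8; 0; 6; 1; 5; 2; 3], 4);
([:: 8; 0; 6; 1; 5; 2; 4], 3);
([:: 8; 0; 6; 1; 5; 2; 7], 3);
([:: 8; 0; 6; 1; 7], 2);
([:: 8; 0; 6; 1; 7; 2; 3], 4);
([:: 8; 0; 6; 1; 7; 2; 4], 3);
([:: 8; 0; 6; 1; 7; 2; 5], 3);
([:: 8; 0; 7], 1);
([:: 8; 0; 7; 1; 2], 3);
([:: 8; 0; 7; 1; 2; 3; 4], 6);
([:: 8; 0; 7; 1; 2; 3; 5], 4);
([:: 8; 0; 7; 1; 2; 3; 6], 4);
([:: 8; 0; 7; 1; 3], 2);
([:: 8; 0; 7; 1; 3; 2; 4], 5);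
([:: 8; 0; 7; 1; 3; 2; 5], 4);
([:: 8; 0; 7; 1; 3; 2; 6], 4);
([:: 8; 0; 7; 1; 4], 2);
([:: 8; 0; 7; 1; 4; 2; 3], 5);
([:: 8; 0; 7; 1; 4; 2; 5], 3);
([:: 8; 0; 7; 1; 4; 2; 6], 3);
([:: 8; 0; 7; 1; 5], 2);
([:: 8; 0; 7; 1; 5; 2; 3], 4);
([:: 8; 0; 7; 1; 5; 2; 4], 3);
([:: 8; 0; 7; 1; 5; 2; 6], 3);
([:: 8; 0; 7; 1; 6], 2);
([:: 8; 0; 7; 1; 6; 2; 3], 4);
([:: 8; 0; 7; 1; 6; 2; 4], 3);
([:: 8; 0; 7; 1; 6; 2; 5], 3)].

Definition sig0 : strategy 3 := fun h => cell_of (lookup (map idx h) tab0).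
Definition sig1 : strategy 3 := fun h => cell_of (lookup (map idx h) tab1).

Definition transL : seq (seq (cell 3)) :=
  [:: [:: mkc 0 0; mkc 1 1; mkc 2 2]; [:: mkc 0 0; mkc 1 2; mkc 2 1];
      [:: mkc 0 1; mkc 1 0; mkc 2 2]; [:: mkc 0 1; mkc 1 2; mkc 2 0];
      [:: mkc 0 2; mkc 1 0; mkc 2 1]; [:: mkc 0 2; mkc 1 1; mkc 2 0]].

Definition ceq (a b : cell 3) := (eqn (nat_of_ord a.1) (nat_of_ord b.1)) && (eqn (nat_of_ord a.2) (nat_of_ord b.2)).
Definition mm (x : cell 3) (A : seq (cell 3)) := has (ceq x) A.
Definition fastHT (A : seq (cell 3)) := has (fun t => all (fun x => mm x A) t) transL.

Definition finishedF (h : seq (cell 3)) :=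
  [|| fastHT (claimed_by false h), fastHT (claimed_by true h) | size h == 9].

Definition allCells : seq (cell 3) := [seq cell_of i | i <- iota 0 9].

Fixpoint chk (p : bool) (s : strategy 3) (k : nat) (h : seq (cell 3)) : bool :=
  if finishedF h then ~~ fastHT (claimed_by (~~ p) h)
  else if k is k'.+1 then
    if odd (size h) == p then (~~ mm (s h) h) && chk p s k' (rcons h (s h))
    else all (fun c => if mm c h then true else chk p s k' (rcons h c)) allCells
  else false.



Lemma perm_in (b0 b1 b2 : 'I_3) : b0 != b1 -> b0 != b2 -> b1 != b2 ->
  [:: (ord3 0, b0); (ord3 1, b1); (ord3 2, b2)] \in transL.
Proof.
case: b0 => [[|[|[|m0]]] p0] //; case: b1 => [[|[|[|m1]]] p1] //;
case: b2 => [[|[|[|m2]]] p2] //;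
rewrite /transL /mkc !inE; vm_compute; try done; try (move=> //).
Qed.

Lemma mmE x A : mm x A = (x \in A).
Proof.
elim: A => [//|y A IH]; rewrite /mm /= in_cons -/(mm x A) IH; congr (_ || _).
Qed.

Lemma trans_complete T : Defs.is_transversal T ->
  exists2 t, t \in transL & {subset t <= T}.
Proof.
case/andP => /eqP cT /forall_inP H.
have Hxy : forall x y, x \in T -> y \in T -> x != y -> (x.1 != y.1) && (x.2 != y.2).
  by move=> x y xT yT; move/forall_inP: (H x xT) => /(_ y yT) /implyP.
have inj1 : {in T &, injective (fun x : cell 3 => x.1)}.
  move=> x y xT yT e; apply/eqP; apply: contraT => ne.
  by move: (Hxy x y xT yT ne); rewrite e eqxx.
have R : forall i : 'I_3, exists2 x, x \in T & x.1 = i.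
  move=> i.
  have E : [set x.1 | x in T] = setT.
    apply/eqP; rewrite eqEcard subsetT cardsT card_ord card_in_imset // cT //.
  have : i \in [set x.1 | x in T] by rewrite E in_setT.
  by case/imsetP => x xT ->; exists x.
case: (R (ord3 0)) => [[a0 b0] x0T /= e0].
case: (R (ord3 1)) => [[a1 b1] x1T /= e1].
case: (R (ord3 2)) => [[a2 b2] x2T /= e2].
subst a0 a1 a2.
have D : forall (i j : nat) bi bj, (ord3 i, bi) \in T -> (ord3 j, bj) \in T ->
   ord3 i != ord3 j -> bi != bj.
  move=> i j bi bj iT jT ne.
  have nx : (ord3 i, bi) != (ord3 j, bj) by apply: contra ne => /eqP [e _]; rewrite e.
  by case/andP: (Hxy _ _ iT jT nx).
exists [:: (ord3 0, b0); (ord3 1, b1); (ord3 2, b2)].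
  by apply: perm_in; [exact: (D 0 1) | exact: (D 0 2) | exact: (D 1 2)].
by move=> x; rewrite !inE => /or3P [] /eqP ->.
Qed.

Lemma trans_sound t : t \in transL -> Defs.is_transversal [set:: t].
Proof.
have G : forall t : seq (cell 3), uniq t -> size t == 3 ->
  all (fun x => all (fun y => (x != y) ==> ((x.1 != y.1) && (x.2 != y.2))) t) t ->
  Defs.is_transversal [set:: t].
  move=> s su ss /allP A; apply/andP; split.
    by rewrite cardsE (card_uniqP su).
  apply/forall_inP => x; rewrite inE => xs; apply/forall_inP => y; rewrite inE => ys.
  by move/allP: (A x xs) => /(_ y ys).
move=> tin.
have OK : all (fun t : seq (cell 3) => [&& uniq t, size t == 3 &
  all (fun x => all (fun y => (x != y) ==> ((x.1 != y.1) && (x.2 != y.2))) t) t]) transL.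
  vm_compute; reflexivity.
by move/allP: OK => /(_ t tin) /and3P [u sz p]; apply: G.
Qed.

Lemma htE A : has_transversal A = fastHT A.
Proof.
rewrite /has_transversal /fastHT.
apply/existsP/hasP.
- case=> T /andP [tT sub].
  case: (trans_complete tT) => t tin tsub.
  exists t => //; apply/allP => x xt; rewrite mmE.
  by move: (subsetP sub x (tsub x xt)); rewrite inE.
- case=> t tin /allP H. exists [set:: t].
  rewrite trans_sound //=.
  by apply/subsetP => x; rewrite !inE => /H; rewrite mmE.
Qed.

Lemma allCellsP (c : cell 3) : c \in allCells.
Proof.
case: c => [[[|[|[|m]]] p] [[|[|[|n]]] q]] //; vm_compute; reflexivity.
Qed.

Lemma finishedE h : finished h = finishedF h.
Proof. by rewrite /finished /finishedF !htE. Qed.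

Lemma iotaS0 n : iota 0 n.+1 = rcons (iota 0 n) n.
Proof. by rewrite -addn1 iotaD add0n cats1. Qed.

Lemma take_rc (h : seq (cell 3)) c k : k <= size h -> take k (rcons h c) = take k h.
Proof. by move=> hk; rewrite -cats1 takel_cat. Qed.

Lemma legal_rcons (h : seq (cell 3)) c : legal_history (rcons h c) ->
  [/\ legal_history h, ~~ finished h & c \notin h].
Proof.
rewrite /legal_history size_rcons rcons_uniq iotaS0 all_rcons.
case/andP=> /andP [cn hu] /andP [nf A].
rewrite take_rc // take_size in nf.
split=> //; rewrite hu /=.
rewrite -(eq_in_all (a1 := fun k => ~~ finished (take k (rcons h c)))) //.
by move=> k; rewrite mem_iota add0n => /andP [_ kl]; rewrite take_rc // ltnW.
Qed.

Lemma cons_rcons p (s : strategy 3) (h : seq (cell 3)) c : consistent p s (rcons h c) ->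
  consistent p s h /\ ((odd (size h) == p) -> c = s h).
Proof.
rewrite /consistent size_rcons iotaS0 all_rcons => /andP [L A]; split.
  rewrite -(eq_in_all (a1 := fun k => (odd k == p) ==>
      (take k.+1 (rcons h c) == rcons (take k (rcons h c)) (s (take k (rcons h c)))))) //.
  by move=> k; rewrite mem_iota add0n => /andP [_ kl]; rewrite !take_rc // ltnW.
move=> o; move: L; rewrite o /= (take_rc c (leqnn (size h))) take_size take_oversize ?size_rcons //.
by move/eqP/rcons_inj => [].
Qed.

Lemma size_le9 (h : seq (cell 3)) : uniq h -> size h <= 9.
Proof.
move=> hu; rewrite -(card_uniqP hu).
by have := max_card (mem h); rewrite card_prod !card_ord.
Qed.

Lemma fuelS (h : seq (cell 3)) : legal_history h -> ~~ finished h ->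
  exists k, 9 - size h = k.+1.
Proof.
move=> L nf.
have hu : uniq h by case/andP: L.
have ne : size h != 9 by move: nf; rewrite finishedE /finishedF; case/norP => _ /norP [_].
have le := size_le9 hu.
case e : (9 - size h) => [|k]; last by exists k.
by move/eqP: e; rewrite subn_eq0 => e; case/negP: ne; rewrite eqn_leq le e.
Qed.

Lemma chkS p s k h : chk p s k.+1 h =
  if finishedF h then ~~ fastHT (claimed_by (~~ p) h)
  else if odd (size h) == p then (~~ mm (s h) h) && chk p s k (rcons h (s h))
    else all (fun c => if mm c h then true else chk p s k (rcons h c)) allCells.
Proof. by []. Qed.

Lemma good p s : chk p s 9 [::] -> forall h, legal_history h -> consistent p s h ->
  chk p s (9 - size h) h.
Proof.
move=> C0; elim/last_ind => [//|h c IH] L Cn.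
case: (legal_rcons L) => Lh nf cn.
case: (cons_rcons Cn) => Ch E.
have := IH Lh Ch.
case: (fuelS Lh nf) => k e; rewrite e size_rcons.
have -> : 9 - (size h).+1 = k by rewrite subnS e.
rewrite chkS -finishedE (negbTE nf).
case: eqP => o.
  by case/andP => _; rewrite -E //; apply/eqP.
by move/allP => /(_ c (allCellsP c)); rewrite mmE (negbTE cn).
Qed.

Lemma chk_ok p s : chk p s 9 [::] -> guarantees_no_loss p s.
Proof.
move=> C0; split.
- move=> h L nf o Cn; have := good C0 L Cn.
  case: (fuelS L nf) => k ->.
  rewrite chkS -finishedE (negbTE nf) o eqxx.
  by case/andP; rewrite mmE.
- move=> h L f Cn; have := good C0 L Cn.
  rewrite htE; case: (9 - size h) => [|k] /=; by rewrite -finishedE f.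
Qed.

Lemma chk0 : chk false sig0 9 [::].
Proof. vm_compute. reflexivity. Qed.

Lemma chk1 : chk true sig1 9 [::].
Proof. vm_compute. reflexivity. Qed.

Theorem mainTheorem2 :
  (exists sigma : strategy 3, guarantees_no_loss false sigma) /\
  (exists tau : strategy 3, guarantees_no_loss true tau).
Proof.
split; [exists sig0; exact: chk_ok chk0 | exists sig1; exact: chk_ok chk1].
Qed.
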